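(* For every integer $n \geq 0$ there exists a simple $\upsilon$-reduction grammar $\mathscr{G}_n$ (as defined in the context), and such a grammar can be effectively constructed (computed) from $n$.
   Context: $\lambda\upsilon$-terms (de Bruijn notation) are generated by: terms $t ::= \underline{n} \mid \lambda t \mid t\,t \mid t[s]$; substitutions $s ::= t/ \mid \Uparrow(s) \mid\ \uparrow$; indices $\underline{n} ::= \underline{0} \mid \mathtt{S}\,\underline{n}$ (successor). The $\upsilon$-rewriting rules are: $(a b)[s] \to a[s](b[s])$; $(\lambda a)[s] \to \lambda(a[\Uparrow(s)])$; $\underline{0}[a/] \to a$; $(\mathtt{S}\,\underline{n})[a/] \to \underline{n}$; $\underline{0}[\Uparrow(s)] \to \underline{0}$; $(\mathtt{S}\,\underline{n})[\Uparrow(s)] \to \underline{n}[s][\uparrow]$; $\underline{n}[\uparrow] \to \mathtt{S}\,\underline{n}$. (The $\upsilon$-fragment is terminating.) A term normalises in $k$ steps if the normal-order (leftmost-outermost) $\upsilon$-reduction reaches a $\upsilon$-normal form in exactly $k$ steps. Regular tree grammars: over the ranked alphabet $\mathscr{F}$ of $\lambda\upsilon$ symbols (application and closure $\cdot[\cdot]$ binary; $\lambda$, slash $\cdot/$, lift $\Uparrow$, successor $\mathtt{S}$ unary; $\uparrow$, $\underline{0}$ constants), $\mathscr{T}_{\mathscr{F}}(X)$ denotes terms over $\mathscr{F}$ with variables (non-terminals) in $X$. A regular tree grammar $(A,\mathscr{N},\mathscr{F},\mathscr{P})$ has axiom $A\in\mathscr{N}$, finite set of non-terminals $\mathscr{N}$,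 and finitely many productions $X \to \alpha$ with $X\in\mathscr{N}$, $\alpha \in \mathscr{T}_{\mathscr{F}}(\mathscr{N})$; derivation replaces one occurrence of a non-terminal $X$ by $\alpha$ for a production $X\to\alpha$. $L(\alpha)$ is the set of ground terms derivable from $\alpha$. A non-terminal $X$ is unambiguous if every ground term has at most one derivation sequence from $X$. A production $X\to\alpha$ is self-referencing if $X$ occurs in $\alpha$, and regular otherwise. Let $\Lambda$ be the grammar with non-terminals $T,S,N$ and productions $T \to N \mid \lambda T \mid T T \mid T[S]$, $S \to T/ \mid \Uparrow(S) \mid \uparrow$, $N \to \underline{0} \mid \mathtt{S} N$ (so $L(T)$, $L(S)$, $L(N)$ are all $\lambda\upsilon$-terms, substitutions, indices). A $\upsilon$-reduction grammar ($\upsilon$-RG) is a regular tree grammar $\mathscr{G}_n = (G_n, \{T,S,N,G_0,\dots,G_n\}, \mathscr{F}, \mathscr{P}_n)$ whose productions include those of $\Lambda$, such that for each $0\le k\le n$ the non-terminal $G_k$ is unambiguous in $\mathscr{G}_n$ and $L(G_k)$ equals the set of $\lambda\upsilon$-terms that normalise in exactly $k$ normal-order $\upsilon$-steps. It is simple if all its self-referencing productions are either productions of $\Lambda$ or of the form $G_k \to \lambda G_k \mid G_0 G_k \mid G_k G_0$, and for every regular production $G_k \to \alpha$ one has $\alpha \in \mathscr{T}_{\mathscr{F}}(\{T,S,N,G_0,\dots,G_{k-1}\})$. *)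

(* Defs.v *)
From Stdlib Require Import List Arith.
Import ListNotations.

(* application, closure  t[s]  : binary
   lambda, slash  t/ , lift  (Uparrow s), successor S : unary
   shift (uparrow), index 0 : constants *)
Inductive tm (X : Type) : Type :=
| Var   : X -> tm X
| App   : tm X -> tm X -> tm X
| Clos  : tm X -> tm X -> tm X
| Lam   : tm X -> tm X
| Slash : tm X -> tm X
| Lift  : tm X -> tm X
| Succ  : tm X -> tm X
| Shift : tm X
| Zero  : tm X.
Arguments Var {X}. Arguments App {X}. Arguments Clos {X}. Arguments Lam {X}.
Arguments Slash {X}. Arguments Lift {X}. Arguments Succ {X}.
Arguments Shift {X}. Arguments Zero {X}.

Inductive novar : Type := .
Definition gtm := tm novar.

Inductive is_index : gtm -> Prop :=
| ix_zero : is_index Zero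
| ix_succ n : is_index n -> is_index (Succ n).

Inductive is_term : gtm -> Prop :=
| tm_idx n : is_index n -> is_term n
| tm_lam a : is_term a -> is_term (Lam a)
| tm_app a b : is_term a -> is_term b -> is_term (App a b)
| tm_clos a s : is_term a -> is_subst s -> is_term (Clos a s)
with is_subst : gtm -> Prop :=
| sb_slash a : is_term a -> is_subst (Slash a)
| sb_lift s : is_subst s -> is_subst (Lift s)
| sb_shift : is_subst Shift.

Inductive root_step : gtm -> gtm -> Prop :=
| r_app a b s : root_step (Clos (App a b) s) (App (Clos a s) (Clos b s))
| r_lam a s : root_step (Clos (Lam a) s) (Lam (Clos a (Lift s)))
| r_zero_slash a : root_step (Clos Zero (Slash a)) a
| r_succ_slash n a : is_index n -> root_step (Clos (Succ n) (Slash a)) n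
| r_zero_lift s : root_step (Clos Zero (Lift s)) Zero
| r_succ_lift n s : is_index n ->
    root_step (Clos (Succ n) (Lift s)) (Clos (Clos n s) Shift)
| r_shift n : is_index n -> root_step (Clos n Shift) (Succ n).

Definition is_redex (t : gtm) : Prop := exists u, root_step t u.

Inductive step : gtm -> gtm -> Prop :=
| st_root t u : root_step t u -> step t u
| st_app_l a a' b : step a a' -> step (App a b) (App a' b)
| st_app_r a b b' : step b b' -> step (App a b) (App a b')
| st_clos_l a a' s : step a a' -> step (Clos a s) (Clos a' s)
| st_clos_r a s s' : step s s' -> step (Clos a s) (Clos a s')
| st_lam a a' : step a a' -> step (Lam a) (Lam a')
| st_slash a a' : step a a' -> step (Slash a) (Slash a')
| st_lift a a' : step a a' -> step (Lift a) (Lift a')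
| st_succ a a' : step a a' -> step (Succ a) (Succ a').

Definition normal (t : gtm) : Prop := forall u, ~ step t u.

Inductive nstep : gtm -> gtm -> Prop :=
| ns_root t u : root_step t u -> nstep t u
| ns_app_l a a' b : ~ is_redex (App a b) -> nstep a a' ->
    nstep (App a b) (App a' b)
| ns_app_r a b b' : ~ is_redex (App a b) -> normal a -> nstep b b' ->
    nstep (App a b) (App a b')
| ns_clos_l a a' s : ~ is_redex (Clos a s) -> nstep a a' ->
    nstep (Clos a s) (Clos a' s)
| ns_clos_r a s s' : ~ is_redex (Clos a s) -> normal a -> nstep s s' ->
    nstep (Clos a s) (Clos a s')
| ns_lam a a' : ~ is_redex (Lam a) -> nstep a a' -> nstep (Lam a) (Lam a')
| ns_slash a a' : ~ is_redex (Slash a) -> nstep a a' -> nstep (Slash a) (Slash a')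
| ns_lift a a' : ~ is_redex (Lift a) -> nstep a a' -> nstep (Lift a) (Lift a')
| ns_succ a a' : ~ is_redex (Succ a) -> nstep a a' -> nstep (Succ a) (Succ a').

Inductive nsteps : nat -> gtm -> gtm -> Prop :=
| nss_0 t : nsteps 0 t t
| nss_S k t u v : nstep t u -> nsteps k u v -> nsteps (S k) t v.

Definition normalises_in (k : nat) (t : gtm) : Prop :=
  is_term t /\ exists u, nsteps k t u /\ normal u.

Inductive nt : Type := NT | NS | NN | NG (k : nat).

Definition nt_eq_dec (x y : nt) : {x = y} + {x <> y}.
Proof. decide equality; apply Nat.eq_dec. Defined.

Definition tm_eq_dec (a b : tm nt) : {a = b} + {a <> b}.
Proof. decide equality; apply nt_eq_dec. Defined.

Definition prod_eq_dec (p q : nt * tm nt) : {p = q} + {p <> q}.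
Proof. decide equality; [apply tm_eq_dec | apply nt_eq_dec]. Defined.

Definition productions := list (nt * tm nt).

(** Boolean membership (proofs of [inb p P = true] are unique, so a derivation
    is determined by the productions it uses). *)
Definition inb (p : nt * tm nt) (P : productions) : bool :=
  if in_dec prod_eq_dec p P then true else false.

Inductive deriv (P : productions) : tm nt -> gtm -> Type :=
| d_var X beta t : inb (X, beta) P = true -> deriv P beta t -> deriv P (Var X) t
| d_app a b u v : deriv P a u -> deriv P b v -> deriv P (App a b) (App u v)
| d_clos a b u v : deriv P a u -> deriv P b v -> deriv P (Clos a b) (Clos u v)
| d_lam a u : deriv P a u -> deriv P (Lam a) (Lam u)
| d_slash a u : deriv P a u -> deriv P (Slash a) (Slash u)
| d_lift a u : deriv P a u -> deriv P (Lift a) (Lift u)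
| d_succ a u : deriv P a u -> deriv P (Succ a) (Succ u)
| d_shift : deriv P Shift Shift
| d_zero : deriv P Zero Zero.

Definition lang (P : productions) (alpha : tm nt) (t : gtm) : Prop :=
  inhabited (deriv P alpha t).

Definition unambiguous (P : productions) (X : nt) : Prop :=
  forall t (d1 d2 : deriv P (Var X) t), d1 = d2.

Fixpoint occurs (X : nt) (a : tm nt) : Prop :=
  match a with
  | Var Y => X = Y
  | App a b | Clos a b => occurs X a \/ occurs X b
  | Lam a | Slash a | Lift a | Succ a => occurs X a
  | Shift | Zero => False
  end.

Definition Lambda_prods : productions :=
  [ (NT, Var NN); (NT, Lam (Var NT)); (NT, App (Var NT) (Var NT));
    (NT, Clos (Var NT) (Var NS));
    (NS, Slash (Var NT)); (NS, Lift (Var NS)); (NS, Shift);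
    (NN, Zero); (NN, Succ (Var NN)) ].

Definition nt_of (n : nat) (X : nt) : Prop :=
  match X with NG k => k <= n | _ => True end.

Definition upsilon_RG (n : nat) (P : productions) : Prop :=
  (forall X alpha, In (X, alpha) P ->
      nt_of n X /\ forall Y, occurs Y alpha -> nt_of n Y) /\
  (forall p, In p Lambda_prods -> In p P) /\
  (forall k, k <= n ->
      unambiguous P (NG k) /\
      forall t, lang P (Var (NG k)) t <-> normalises_in k t).

Definition simple_RG (n : nat) (P : productions) : Prop :=
  upsilon_RG n P /\
  (forall X alpha, In (X, alpha) P -> occurs X alpha ->
      In (X, alpha) Lambda_prods \/
      exists k, X = NG k /\
        (alpha = Lam (Var (NG k)) \/
         alpha = App (Var (NG 0)) (Var (NG k)) \/
         alpha = App (Var (NG k)) (Var (NG 0)))) /\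
  (forall k alpha, In (NG k, alpha) P -> ~ occurs (NG k) alpha ->
      forall Y, occurs Y alpha ->
        Y = NT \/ Y = NS \/ Y = NN \/ exists j, j < k /\ Y = NG j).

(* Main.v *)
Require Import Defs.
From Stdlib Require Import List Arith Lia Wellfounded.
Import ListNotations.


Ltac mlia := unfold gtm in *; simpl in *; lia.

(** * Part 1: ground cost machine *)

Inductive Cost : gtm -> list gtm -> nat -> Prop :=
| c_clos a s σ c : Cost a (s :: σ) c -> Cost (Clos a s) σ c
| c_app u v σ c1 c2 : Cost u σ c1 -> Cost v σ c2 -> Cost (App u v) σ (length σ + c1 + c2)
| c_lam u σ c : Cost u (map Lift σ) c -> Cost (Lam u) σ (length σ + c)
| c_z0 : Cost Zero [] 0
| c_s0 n : Cost (Succ n) [] 0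
| c_zs b σ c : Cost b σ c -> Cost Zero (Slash b :: σ) (S c)
| c_ss n b σ c : Cost n σ c -> Cost (Succ n) (Slash b :: σ) (S c)
| c_zl s σ c : Cost Zero σ c -> Cost Zero (Lift s :: σ) (S c)
| c_sl n s σ c : Cost n (s :: Shift :: σ) c -> Cost (Succ n) (Lift s :: σ) (S c)
| c_sh0 σ c : Cost (Succ Zero) σ c -> Cost Zero (Shift :: σ) (S c)
| c_shS n σ c : Cost (Succ (Succ n)) σ c -> Cost (Succ n) (Shift :: σ) (S c).

Create HintDb idx.
Hint Constructors is_index : idx.

Lemma Cost_fun : forall a σ c1, Cost a σ c1 -> forall d, Cost a σ d -> c1 = d.
Proof.
  induction 1; intros d H2; inversion H2; subst; f_equal; eauto.
Qed.

Lemma Cost_lb : forall a σ c, Cost a σ c -> length σ <= c.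
Proof. induction 1; simpl in *; try rewrite length_map in *; unfold gtm in *; mlia. Qed.

Lemma Cost_clos_iff a s σ c : Cost (Clos a s) σ c <-> Cost a (s :: σ) c.
Proof. split; intro H; [inversion H; subst; auto | constructor; auto]. Qed.

Lemma Cost_clos_inv a s σ c : Cost (Clos a s) σ c -> Cost a (s :: σ) c.
Proof. apply Cost_clos_iff. Qed.

Lemma Cost_app_iff u v σ c : Cost (App u v) σ c <->
  exists c1 c2, c = length σ + c1 + c2 /\ Cost u σ c1 /\ Cost v σ c2.
Proof.
  split; intro H.
  - inversion H; subst; eauto.
  - destruct H as (c1 & c2 & -> & H1 & H2); constructor; auto.
Qed.

Lemma Cost_lam_iff u σ c : Cost (Lam u) σ c <->
  exists c', c = length σ + c' /\ Cost u (map Lift σ) c'.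
Proof.
  split; intro H.
  - inversion H; subst; eauto.
  - destruct H as (c' & -> & H1); constructor; auto.
Qed.

Scheme is_term_ind2 := Induction for is_term Sort Prop
with is_subst_ind2 := Induction for is_subst Sort Prop.

Lemma index_normal : forall n, is_index n -> normal n.
Proof.
  induction 1; intros u Hs; inversion Hs; subst.
  - inversion H.
  - inversion H0.
  - eapply IHis_index; eauto.
Qed.

Lemma nstep_step : forall t u, nstep t u -> step t u.
Proof.
  induction 1; [apply st_root | apply st_app_l | apply st_app_r | apply st_clos_l
  | apply st_clos_r | apply st_lam | apply st_slash | apply st_lift | apply st_succ]; auto.
Qed.

Lemma term_not_subst_shape t : is_term t ->
  match t with Slash _ | Lift _ | Shift => False | _ => True end.
Proof. intro H; inversion H; subst; auto; inversion H0; auto. Qed.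

Lemma is_term_inv t : is_term t ->
  match t with
  | App a b => is_term a /\ is_term b
  | Clos a s => is_term a /\ is_subst s
  | Lam a => is_term a
  | Succ n => is_index n
  | Zero => True
  | _ => False
  end.
Proof. intro H; inversion H; subst; auto; inversion H0; subst; auto. Qed.

Lemma is_subst_inv t : is_subst t ->
  match t with
  | Slash a => is_term a
  | Lift s => is_subst s
  | Shift => True
  | _ => False
  end.
Proof. intro H; inversion H; subst; auto. Qed.

Lemma nn_root x u : root_step x u -> ~ normal x.
Proof. intros H Hn. exact (Hn u (st_root _ _ H)). Qed.

Lemma no_normal_clos : forall a, is_term a -> forall s, is_subst s -> ~ normal (Clos a s).
Proof.
  induction a; intros Ha s Hs; apply is_term_inv in Ha; try contradiction.
  - eapply nn_root. constructor.
  - intro Hn. destruct Ha as [Ha1 Ha2]. apply (IHa1 Ha1 a2 Ha2).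
    intros u Hu. eapply Hn. apply st_clos_l; eauto.
  - eapply nn_root. constructor.
  - apply is_subst_inv in Hs. destruct s; try contradiction;
      eapply nn_root; constructor; auto; constructor; auto.
  - apply is_subst_inv in Hs. destruct s; try contradiction;
      eapply nn_root; constructor; auto; constructor.
Qed.

Lemma normal_clos_false a s : is_term (Clos a s) -> normal (Clos a s) -> False.
Proof. intros H Hn; apply is_term_inv in H as [H1 H2]; exact (no_normal_clos a H1 s H2 Hn). Qed.

Lemma not_redex_clos a s : is_term a -> is_subst s -> ~ is_redex (Clos a s) ->
  exists a0 s0, a = Clos a0 s0.
Proof.
  intros Ha Hs Hr. pose proof (is_term_inv _ Ha) as Ha'.
  apply is_subst_inv in Hs.
  destruct a; try contradiction; try (now eauto); exfalso; apply Hr;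
   destruct s; try contradiction; eexists;
   first [ constructor; auto; fail | constructor; constructor; auto ].
Qed.

Lemma RS : forall x x', root_step x x' -> forall σ c, Cost x' σ c -> Cost x σ (S c).
Proof.
  intros x x' H; destruct H; intros σ c Hc.
  - apply Cost_app_iff in Hc as (c1 & c2 & -> & H1 & H2).
    apply Cost_clos_inv in H1; apply Cost_clos_inv in H2.
    constructor. replace (S (length σ + c1 + c2)) with (length (s :: σ) + c1 + c2) by (simpl; mlia).
    constructor; auto.
  - apply Cost_lam_iff in Hc as (c' & -> & H1). apply Cost_clos_inv in H1.
    constructor. replace (S (length σ + c')) with (length (s :: σ) + c') by (simpl; mlia).
    constructor; auto.
  - constructor; constructor; auto.
  - constructor; constructor; auto.
  - constructor; constructor; auto.
  - apply Cost_clos_inv in Hc. apply Cost_clos_inv in Hc.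
    constructor; constructor; auto.
  - constructor. destruct H; constructor; auto.
Qed.

Lemma RS_sort x x' : root_step x x' -> is_term x -> is_term x'.
Proof.
  intros H Hx; destruct H; apply is_term_inv in Hx; destruct Hx as [Ha Hs];
    apply is_term_inv in Ha; simpl in *.
  - destruct Ha; apply tm_app; apply tm_clos; auto.
  - apply tm_lam. apply tm_clos; auto. apply sb_lift; auto.
  - apply is_subst_inv in Hs; auto.
  - apply tm_idx; auto.
  - apply tm_idx; constructor.
  - apply tm_clos. apply tm_clos; auto. apply tm_idx; auto. apply is_subst_inv in Hs; auto.
    apply sb_shift.
  - apply tm_idx; constructor; auto.
Qed.

Lemma SR : forall t u, nstep t u ->
  (is_term t -> is_term u) /\ (is_subst t -> is_subst u).
Proof.
  induction 1.
  - split; intro Hs. eapply RS_sort; eauto. destruct H; inversion Hs.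
  - split; intro Hs; [|inversion Hs]. apply is_term_inv in Hs as [Hx1 Hx2].
    apply tm_app; auto. apply IHnstep; auto.
  - split; intro Hs; [|inversion Hs]. apply is_term_inv in Hs as [Hx1 Hx2].
    apply tm_app; auto. apply IHnstep; auto.
  - split; intro Hs; [|inversion Hs]. apply is_term_inv in Hs as [Hx1 Hx2].
    apply tm_clos; auto. apply IHnstep; auto.
  - split; intro Hs; [|inversion Hs]. apply is_term_inv in Hs as [Ha Hb].
    destruct (not_redex_clos _ _ Ha Hb H) as (a0 & s0 & ->).
    apply is_term_inv in Ha as [Ha0 Hs0].
    exfalso; exact (no_normal_clos a0 Ha0 s0 Hs0 H0).
  - split; intro Hs; [|inversion Hs]. apply is_term_inv in Hs.
    apply tm_lam; apply IHnstep; auto.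
  - split; intro Hs. exfalso; apply is_term_inv in Hs; auto.
    apply is_subst_inv in Hs. apply sb_slash. apply IHnstep; auto.
  - split; intro Hs. exfalso; apply is_term_inv in Hs; auto.
    apply is_subst_inv in Hs. apply sb_lift. apply IHnstep; auto.
  - split; intro Hs; [| apply is_subst_inv in Hs; contradiction].
    exfalso. apply is_term_inv in Hs; simpl in Hs.
    eapply index_normal; eauto. apply nstep_step; eauto.
Qed.

Lemma SR_term t u : nstep t u -> is_term t -> is_term u.
Proof. intros H; apply (SR _ _ H). Qed.

Lemma L1 : forall u, is_term u -> normal u -> Cost u [] 0.
Proof.
  induction u; intros Ht Hn; pose proof (is_term_inv _ Ht) as H'; simpl in H'; try contradiction.
  - destruct H' as [H1 H2].
    apply (c_app _ _ [] 0 0); [apply IHu1 | apply IHu2]; auto;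
      intros w Hw; eapply Hn; [apply st_app_l | apply st_app_r]; eauto.
  - exfalso; destruct H'; exact (no_normal_clos _ H _ H0 Hn).
  - apply (c_lam _ [] 0). apply IHu; auto. intros w Hw; eapply Hn; apply st_lam; eauto.
  - constructor.
  - constructor.
Qed.

Lemma L2clos : forall a, is_term a -> (exists a0 s0, a = Clos a0 s0) ->
  forall x, nstep a x -> forall τ c, Cost x τ c -> Cost a τ (S c).
Proof.
  induction a; intros Ha [a0 [s0 E]]; try discriminate. injection E as <- <-.
  intros x Hst. pose proof Ha as Hc0. apply is_term_inv in Ha as [Ha Hs].
  inversion Hst; subst.
  - intros; eapply RS; eauto.
  - intros τ c Hc. apply Cost_clos_inv in Hc. apply Cost_clos_iff.
    destruct (not_redex_clos _ _ Ha Hs H1) as (b1 & t1 & ->).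
    eapply IHa1; eauto.
  - destruct (not_redex_clos _ _ Ha Hs H1) as (b1 & t1 & ->).
    exfalso; apply (normal_clos_false b1 t1); assumption.
Qed.

Lemma L2 : forall t t', nstep t t' -> is_term t -> forall c, Cost t' [] c -> Cost t [] (S c).
Proof.
  induction 1; intros Ht c Hc; pose proof (is_term_inv _ Ht) as H'; simpl in H'.
  - eapply RS; eauto.
  - apply Cost_app_iff in Hc as (c1 & c2 & -> & Hy1 & Hy2).
    apply (c_app _ _ [] (S c1) c2); auto. apply IHnstep; tauto.
  - apply Cost_app_iff in Hc as (c1 & c2 & -> & Hy1 & Hy2).
    assert (c1 = 0) as -> by (apply (Cost_fun a [] c1 Hy1); apply L1; tauto).
    replace (S (length (@nil gtm) + 0 + c2)) with (length (@nil gtm) + 0 + S c2) by (simpl; mlia).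
    apply c_app; auto. apply IHnstep; tauto.
  - apply Cost_clos_iff. apply Cost_clos_inv in Hc. destruct H' as [Ha Hb].
    destruct (not_redex_clos _ _ Ha Hb H) as (a0 & s0 & ->).
    eapply L2clos; eauto.
  - destruct H' as [Ha Hb].
    destruct (not_redex_clos _ _ Ha Hb H) as (a0 & s0 & ->).
    exfalso; apply (normal_clos_false a0 s0); assumption.
  - apply Cost_lam_iff in Hc as (c' & -> & Hy1). apply (c_lam _ [] (S c')).
    apply IHnstep; auto.
  - contradiction.
  - contradiction.
  - exfalso. eapply index_normal; eauto. apply nstep_step; eauto.
Qed.

Lemma L4 : forall t σ c, Cost t σ c -> σ = [] -> c = 0 -> is_term t -> normal t.
Proof.
  induction 1; intros E1 E2 Ht; subst; simpl in *; try discriminate.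
  - apply Cost_lb in H; simpl in H; mlia.
  - apply is_term_inv in Ht as [Hx1 Hx2].
    assert (c1 = 0) by mlia. assert (c2 = 0) by mlia.
    intros w Hw; inversion Hw; subst.
    + inversion H3.
    + eapply (IHCost1 eq_refl eq_refl Hx1); eauto.
    + eapply (IHCost2 eq_refl eq_refl Hx2); eauto.
  - apply is_term_inv in Ht. intros w Hw; inversion Hw; subst.
    + inversion H0.
    + eapply (IHCost eq_refl eq_refl Ht); eauto.
  - apply index_normal; constructor.
  - apply index_normal. apply is_term_inv in Ht; constructor; auto.
Qed.

Lemma L3clos : forall a, is_term a -> (exists a0 s0, a = Clos a0 s0) ->
  forall τ c, Cost a τ (S c) -> exists a', nstep a a' /\ Cost a' τ c.
Proof.
  induction a; intros Ha [a0 [s0 E]]; try discriminate. injection E as -> ->.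
  intros τ c Hc. apply Cost_clos_inv in Hc. apply is_term_inv in Ha as [Ha Hs].
  pose proof (is_term_inv _ Ha) as Ha'.
  destruct a0; simpl in Ha'; try contradiction.
  - apply Cost_app_iff in Hc as (c1 & c2 & E & H1 & H2).
    exists (App (Clos a0_1 s0) (Clos a0_2 s0)). split. apply ns_root; constructor.
    simpl in E. replace c with (length τ + c1 + c2) by mlia.
    constructor; constructor; auto.
  - destruct (IHa1 Ha (ex_intro _ _ (ex_intro _ _ eq_refl)) _ _ Hc) as (a' & H1 & H2).
    exists (Clos a' s0). split.
    + apply ns_clos_l; auto. intros [u Hu]; inversion Hu; subst; match goal with H : is_index (Clos _ _) |- _ => inversion H end.
    + constructor; auto.
  - apply Cost_lam_iff in Hc as (c' & E & H1).
    exists (Lam (Clos a0 (Lift s0))). split. apply ns_root; constructor.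
    simpl in E. replace c with (length τ + c') by mlia. constructor. constructor. auto.
  - apply is_subst_inv in Hs. destruct s0; try contradiction; inversion Hc; subst;
      (eexists; split; [apply ns_root; econstructor; eauto with idx | eauto]).
    constructor; constructor; auto.
  - apply is_subst_inv in Hs. destruct s0; try contradiction; inversion Hc; subst;
      (eexists; split; [apply ns_root; econstructor; eauto with idx | eauto]).
Qed.

Lemma L3 : forall t, is_term t -> forall c, Cost t [] (S c) -> exists t', nstep t t' /\ Cost t' [] c.
Proof.
  induction t; intros Ht c Hc; pose proof (is_term_inv _ Ht) as H'; simpl in H'; try contradiction.
  - apply Cost_app_iff in Hc as (c1 & c2 & E & H1 & H2). simpl in E.
    destruct c1 as [|c1].
    + destruct (IHt2 (proj2 H') c) as (t' & Hs & Hc'). replace c2 with (S c) in H2 by mlia. auto.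
      exists (App t1 t'); split.
      * apply ns_app_r; auto. intros [u Hu]; inversion Hu. eapply L4; eauto. tauto.
      * apply (c_app _ _ [] 0 c); auto.
    + destruct (IHt1 (proj1 H') c1) as (t' & Hs & Hc'); auto.
      exists (App t' t2); split.
      * apply ns_app_l; auto. intros [u Hu]; inversion Hu.
      * replace c with (length (@nil gtm) + c1 + c2) by (simpl; mlia). constructor; auto.
  - eapply L3clos; eauto.
  - apply Cost_lam_iff in Hc as (c' & E & H1). simpl in E; subst.
    destruct (IHt H' c) as (t' & Hs & Hc'); auto.
    exists (Lam t'); split. apply ns_lam; auto. intros [u Hu]; inversion Hu.
    apply (c_lam _ [] c); auto.
  - inversion Hc.
  - inversion Hc.
Qed.

Theorem normalises_iff : forall k t, normalises_in k t <-> is_term t /\ Cost t [] k.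
Proof.
  intros k t; split.
  - intros [Ht [u [Hs Hn]]]. split; auto. revert Ht. induction Hs; intro Ht.
    + apply L1; auto.
    + apply (L2 t u); auto. apply IHHs; auto. eapply SR_term; eauto.
  - intros [Ht Hc]. split; auto. revert t Ht Hc. induction k; intros t Ht Hc.
    + exists t; split. constructor. eapply L4; eauto.
    + destruct (L3 t Ht k Hc) as (t' & Hs & Hc').
      destruct (IHk t' (SR_term _ _ Hs Ht) Hc') as (u & H1 & H2).
      exists u; split; auto. econstructor; eauto.
Qed.


(** * Part 2: patterns, paths, matching *)

Definition path := list nat.

Definition child {X} (t : tm X) (i : nat) : option (tm X) :=
  match t, i with
  | App a _, 0 | Clos a _, 0 | Lam a, 0 | Slash a, 0 | Lift a, 0 | Succ a, 0 => Some a
  | App _ b, 1 | Clos _ b, 1 => Some b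
  | _, _ => None
  end.

Fixpoint sub {X} (t : tm X) (p : path) : option (tm X) :=
  match p with
  | [] => Some t
  | i :: p' => match child t i with Some c => sub c p' | None => None end
  end.

Definition set_child {X} (t : tm X) (i : nat) (c : tm X) : tm X :=
  match t, i with
  | App _ b, 0 => App c b | App a _, 1 => App a c
  | Clos _ b, 0 => Clos c b | Clos a _, 1 => Clos a c
  | Lam _, 0 => Lam c | Slash _, 0 => Slash c | Lift _, 0 => Lift c | Succ _, 0 => Succ c
  | _, _ => t
  end.

Fixpoint repl {X} (t : tm X) (p : path) (q : tm X) : tm X :=
  match p with
  | [] => q
  | i :: p' => match child t i with Some c => set_child t i (repl c p' q) | None => t end
  end.

Lemma child_set_same {X} (t : tm X) i c c' : child t i = Some c -> child (set_child t i c') i = Some c'.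
Proof. destruct t; destruct i as [|[|i]]; simpl; congruence. Qed.

Lemma child_set_other {X} (t : tm X) i j c' : i <> j -> child (set_child t i c') j = child t j.
Proof. intros H; destruct t; destruct i as [|[|i]]; destruct j as [|[|j]]; simpl; auto; congruence. Qed.

Lemma sub_app {X} : forall (p q : path) (t : tm X),
  sub t (p ++ q) = match sub t p with Some t' => sub t' q | None => None end.
Proof.
  induction p; intros q t; simpl; auto.
  destruct (child t a); auto.
Qed.

Lemma sub_repl_same {X} : forall p (R : tm X) u q, sub R p = Some u -> sub (repl R p q) p = Some q.
Proof.
  induction p; intros R u q H; simpl in *; auto.
  destruct (child R a) eqn:E; try discriminate.
  erewrite child_set_same; eauto.
Qed.

Lemma sub_repl_valid {X} : forall p' (R : tm X) p Y q, sub R p = Some (Var Y) ->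
  sub R p' <> None -> sub (repl R p q) p' <> None.
Proof.
  induction p'; intros R p Y q H1 H2; simpl in *; try congruence.
  destruct (child R a) eqn:E; try congruence.
  destruct p as [|j p0]; simpl in H1.
  - injection H1 as ->. simpl in E. discriminate.
  - destruct (child R j) eqn:E2; try discriminate.
    destruct (Nat.eq_dec j a).
    + subst. rewrite E in E2; injection E2 as ->.
      simpl. rewrite E. erewrite child_set_same; eauto.
    + simpl. rewrite E2. rewrite child_set_other; auto. rewrite E; auto.
Qed.

Fixpoint tsize {X} (t : tm X) : nat :=
  match t with
  | Var _ | Shift | Zero => 1
  | App a b | Clos a b => 1 + tsize a + tsize b
  | Lam a | Slash a | Lift a | Succ a => 1 + tsize a
  end.

Lemma tsize_pos {X} (t : tm X) : 1 <= tsize t.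
Proof. destruct t; simpl; lia. Qed.

Lemma tsize_set_child {X} (t : tm X) i c c' : child t i = Some c -> tsize c' = tsize c ->
  tsize (set_child t i c') = tsize t.
Proof. destruct t; destruct i as [|[|i]]; simpl; intros H1 H2; try injection H1 as <-; lia || congruence. Qed.

Lemma tsize_repl_var {X} : forall p (R : tm X) Y Z, sub R p = Some (Var Y) ->
  tsize (repl R p (Var Z)) = tsize R.
Proof.
  induction p; intros R Y Z H; simpl in *.
  - injection H as ->; reflexivity.
  - destruct (child R a) eqn:E; try discriminate.
    eapply tsize_set_child; eauto.
Qed.

Lemma sub_repl_var_size {X} : forall p' (R : tm X) p Y Z, sub R p = Some (Var Y) ->
  option_map tsize (sub (repl R p (Var Z)) p') = option_map tsize (sub R p').
Proof.
  induction p'; intros R p Y Z H1; simpl in *.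
  - f_equal. eapply tsize_repl_var; eauto.
  - destruct p as [|j p0]; simpl in H1.
    + injection H1 as ->. reflexivity.
    + destruct (child R j) eqn:E2; try discriminate.
      destruct (Nat.eq_dec j a).
      * subst. simpl. rewrite E2. erewrite child_set_same; eauto.
      * simpl. rewrite E2. rewrite child_set_other; auto.
Qed.

Definition valid (X : nt) (t : gtm) : Prop :=
  match X with
  | NT => is_term t
  | NS => is_subst t
  | NN => is_index t
  | NG j => is_term t /\ Cost t [] j
  end.

Fixpoint Match (b : tm nt) (t : gtm) : Prop :=
  match b, t with
  | Var X, _ => valid X t
  | App a b, App u v => Match a u /\ Match b v
  | Clos a b, Clos u v => Match a u /\ Match b v
  | Lam a, Lam u => Match a u
  | Slash a, Slash u => Match a u
  | Lift a, Lift u => Match a u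
  | Succ a, Succ u => Match a u
  | Shift, Shift => True
  | Zero, Zero => True
  | _, _ => False
  end.

Lemma Match_child : forall (R : tm nt) g i c, Match R g -> child R i = Some c ->
  exists gi, child g i = Some gi /\ Match c gi.
Proof.
  intros R g i c H1 H2; destruct R; destruct g; simpl in *; try contradiction;
  destruct i as [|[|i]]; simpl in *; try discriminate; injection H2 as <-; eexists; split; eauto; tauto.
Qed.

Lemma Match_set_child_inv : forall (R : tm nt) g i c c', child R i = Some c ->
  (forall gi, Match c' gi -> Match c gi) -> Match (set_child R i c') g -> Match R g.
Proof.
  intros R g i c c' H1 H2 H3; destruct R; destruct g; destruct i as [|[|i]]; simpl in *;
    try discriminate; try injection H1 as <-; intuition.
Qed.

Lemma Match_set_child : forall (R : tm nt) g i c c' gi, child R i = Some c ->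
  Match R g -> child g i = Some gi -> Match c' gi -> Match (set_child R i c') g.
Proof.
  intros R g i c c' gi H1 H2 H3 H4; destruct R; destruct g; destruct i as [|[|i]]; simpl in *;
    try discriminate; try contradiction; try injection H3 as <-; intuition.
Qed.

Lemma Match_sub : forall p (R : tm nt) g u, Match R g -> sub R p = Some u ->
  exists g', sub g p = Some g' /\ Match u g'.
Proof.
  induction p; intros R g u H1 H2; simpl in *.
  - injection H2 as <-. eauto.
  - destruct (child R a) eqn:E; try discriminate.
    destruct (Match_child _ _ _ _ H1 E) as (gi & E' & H3). rewrite E'. eauto.
Qed.

Lemma Match_repl_inv : forall p (R : tm nt) X q g, sub R p = Some (Var X) ->
  (forall t, Match q t -> valid X t) -> Match (repl R p q) g -> Match R g.
Proof.
  induction p; intros R X q g H1 H2 H3; simpl in *.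
  - injection H1 as ->. simpl. auto.
  - destruct (child R a) eqn:E; try discriminate.
    eapply Match_set_child_inv; [exact E | | exact H3].
    intros gi Hgi. eapply IHp; eauto.
Qed.

Lemma Match_repl_sub : forall p (R : tm nt) X q g, sub R p = Some (Var X) ->
  Match (repl R p q) g -> exists g', sub g p = Some g' /\ Match q g'.
Proof.
  intros. eapply Match_sub; eauto. eapply sub_repl_same; eauto.
Qed.

Lemma Match_repl : forall p (R : tm nt) X q g g', sub R p = Some (Var X) ->
  Match R g -> sub g p = Some g' -> Match q g' -> Match (repl R p q) g.
Proof.
  induction p; intros R X q g g' H1 H2 H3 H4; simpl in *.
  - injection H3 as <-. auto.
  - destruct (child R a) eqn:E; try discriminate.
    destruct (Match_child _ _ _ _ H2 E) as (gi & E' & H5). rewrite E' in H3.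
    eapply Match_set_child; eauto.
Qed.

Definition gsub (g : gtm) (p : path) : gtm :=
  match sub g p with Some u => u | None => Zero end.

Fixpoint inst (g : gtm) (t : tm path) : gtm :=
  match t with
  | Var p => gsub g p
  | App a b => App (inst g a) (inst g b)
  | Clos a b => Clos (inst g a) (inst g b)
  | Lam a => Lam (inst g a)
  | Slash a => Slash (inst g a)
  | Lift a => Lift (inst g a)
  | Succ a => Succ (inst g a)
  | Shift => Shift
  | Zero => Zero
  end.

Definition expose (p : path) (u : tm nt) : tm path :=
  match u with
  | App _ _ => App (Var (p ++ [0])) (Var (p ++ [1]))
  | Clos _ _ => Clos (Var (p ++ [0])) (Var (p ++ [1]))
  | Lam _ => Lam (Var (p ++ [0]))
  | Slash _ => Slash (Var (p ++ [0]))
  | Lift _ => Lift (Var (p ++ [0]))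
  | Succ _ => Succ (Var (p ++ [0]))
  | Shift => Shift
  | Zero => Zero
  | Var _ => Var p
  end.

Lemma inst_expose : forall R g p u, Match R g -> sub R p = Some u ->
  inst g (expose p u) = gsub g p.
Proof.
  intros R g p u H1 H2.
  destruct (Match_sub _ _ _ _ H1 H2) as (g' & E & H3).
  destruct u; destruct g'; simpl in H3; try contradiction; simpl;
    unfold gsub; rewrite ?sub_app, E; simpl; reflexivity.
Qed.

Fixpoint allv {X} (P : X -> Prop) (t : tm X) : Prop :=
  match t with
  | Var x => P x
  | App a b | Clos a b => allv P a /\ allv P b
  | Lam a | Slash a | Lift a | Succ a => allv P a
  | Shift | Zero => True
  end.

Definition okp (R : tm nt) (p : path) : Prop := sub R p <> None.

Lemma allv_expose : forall R p u, sub R p = Some u -> allv (okp R) (expose p u).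
Proof.
  intros R p u H; unfold okp; destruct u; simpl; repeat split;
   rewrite ?sub_app, H; simpl; congruence.
Qed.

Lemma allv_mono {X} (P Q : X -> Prop) : (forall x, P x -> Q x) -> forall t, allv P t -> allv Q t.
Proof. intros H t; induction t; simpl; intuition. Qed.

Inductive cls := CHole (p : path) (X : nt) | CCon (a : tm path) | CBad.

Definition classify (R : tm nt) (t : tm path) : cls :=
  match t with
  | Var p => match sub R p with
             | Some (Var X) => CHole p X
             | Some u => CCon (expose p u)
             | None => CBad
             end
  | _ => CCon t
  end.

Definition notvar {X} (t : tm X) : Prop := match t with Var _ => False | _ => True end.

Lemma classify_con : forall R t a, classify R t = CCon a ->
  (forall g, Match R g -> inst g a = inst g t) /\ notvar a /\ (allv (okp R) t -> allv (okp R) a).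
Proof.
  intros R t a H. destruct t; simpl in H.
  - destruct (sub R p) eqn:E; [|discriminate].
    destruct t; try discriminate; injection H as <-; (split; [|split]);
      try (intros g Hg; pose proof (inst_expose R g p _ Hg E) as HH; simpl in HH |- *; exact HH);
      try (intros _; pose proof (allv_expose R p _ E) as HH; simpl in HH |- *; exact HH); simpl; auto.
  - injection H as <-; split; [intros; reflexivity | split; [simpl; auto | intros HH; exact HH]].
  - injection H as <-; split; [intros; reflexivity | split; [simpl; auto | intros HH; exact HH]].
  - injection H as <-; split; [intros; reflexivity | split; [simpl; auto | intros HH; exact HH]].
  - injection H as <-; split; [intros; reflexivity | split; [simpl; auto | intros HH; exact HH]].
  - injection H as <-; split; [intros; reflexivity | split; [simpl; auto | intros HH; exact HH]].
  - injection H as <-; split; [intros; reflexivity | split; [simpl; auto | intros HH; exact HH]].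
  - injection H as <-; split; [intros; reflexivity | split; [simpl; auto | intros HH; exact HH]].
  - injection H as <-; split; [intros; reflexivity | split; [simpl; auto | intros HH; exact HH]].
Qed.

Lemma classify_hole : forall R t p X, classify R t = CHole p X -> t = Var p /\ sub R p = Some (Var X).
Proof.
  intros R t p X H; destruct t; simpl in H; try discriminate.
  destruct (sub R p0) eqn:E; try discriminate. destruct t; try discriminate.
  injection H as <- <-. auto.
Qed.

Lemma classify_bad : forall R t, classify R t = CBad -> allv (okp R) t -> False.
Proof.
  intros R t H; destruct t; simpl in H; try discriminate.
  destruct (sub R p) eqn:E; try (destruct t; discriminate). simpl. unfold okp. auto.
Qed.


(** * Part 3: the symbolic machine *)

Definition job := (tm path * list (tm path))%type.
Definition state := (tm nt * list job * nat)%type.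

Definition charge (c : nat) (R : tm nt) (J : list job) (b : nat) : list state :=
  if c <=? b then [(R, J, b - c)] else [].

Definition fire (R : tm nt) (a s : tm path) (rest : list (tm path)) (J : list job) (b : nat)
  : list state :=
  match a, s with
  | Zero, Slash x => charge 1 R ((x, rest) :: J) b
  | Succ n, Slash _ => charge 1 R ((n, rest) :: J) b
  | Zero, Lift _ => charge 1 R ((Zero, rest) :: J) b
  | Succ n, Lift s' => charge 1 R ((n, s' :: Shift :: rest) :: J) b
  | Zero, Shift => charge 1 R ((Succ Zero, rest) :: J) b
  | Succ n, Shift => charge 1 R ((Succ (Succ n), rest) :: J) b
  | _, _ => []
  end.

Definition casesS : list (tm nt) := [Slash (Var NT); Lift (Var NS); Shift].
Definition casesN : list (tm nt) := [Zero; Succ (Var NN)].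
Definition casesT : list (tm nt) :=
  [Zero; Succ (Var NN); Lam (Var NT); App (Var NT) (Var NT); Clos (Var NT) (Var NS)].
Definition expandG (b : tm nt) : list (tm nt) :=
  match b with Var NN => casesN | Var _ => [] | _ => [b] end.
Definition casesG (pr : nat -> list (tm nt)) (j : nat) : list (tm nt) :=
  flat_map expandG (pr j).

Definition idx_step (R : tm nt) (a : tm path) (σ : list (tm path)) (J : list job) (b : nat)
  : list state :=
  match σ with
  | [] => [(R, J, b)]
  | s :: rest =>
      match classify R s with
      | CHole p NS => flat_map (fun q => fire (repl R p q) a (expose p q) rest J b) casesS
      | CCon s' => fire R a s' rest J b
      | _ => []
      end
  end.

Definition con_step (R : tm nt) (a : tm path) (σ : list (tm path)) (J : list job) (b : nat)
  : list state :=
  match a with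
  | Clos x s => [(R, (x, s :: σ) :: J, b)]
  | App u v => charge (length σ) R ((u, σ) :: (v, σ) :: J) b
  | Lam u => charge (length σ) R ((u, map Lift σ) :: J) b
  | Zero | Succ _ => idx_step R a σ J b
  | _ => []
  end.

Definition hcases (pr : nat -> list (tm nt)) (X : nt) : list (tm nt) :=
  match X with NT => casesT | NN => casesN | NG j => casesG pr j | NS => [] end.

Definition hole_step (pr : nat -> list (tm nt)) (R : tm nt) (p : path) (X : nt)
  (σ : list (tm path)) (J : list job) (b : nat) : list state :=
  match σ with
  | [] => match X with
          | NT => map (fun j => (repl R p (Var (NG j)), J, b - j)) (seq 0 (S b))
          | NG j => charge j R J b
          | NN => [(R, J, b)]
          | NS => []
          end
  | _ => flat_map (fun q => con_step (repl R p q) (expose p q) σ J b) (hcases pr X)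
  end.

Definition step (pr : nat -> list (tm nt)) (S : state) : list state :=
  match S with
  | (R, [], b) => []
  | (R, (a, σ) :: J, b) =>
      match classify R a with
      | CHole p X => hole_step pr R p X σ J b
      | CCon a' => con_step R a' σ J b
      | CBad => []
      end
  end.

Definition LB (J : list job) : nat := fold_right (fun jb acc => length (snd jb) + acc) 0 J.

Fixpoint rsize (R : tm nt) (t : tm path) : nat :=
  match t with
  | Var p => match sub R p with Some u => tsize u | None => 1 end
  | App a b | Clos a b => 1 + rsize R a + rsize R b
  | Lam a | Slash a | Lift a | Succ a => 1 + rsize R a
  | Shift | Zero => 1
  end.

Definition TS (R : tm nt) (J : list job) : nat := fold_right (fun jb acc => rsize R (fst jb) + acc) 0 J.

Definition sR (S : state) : tm nt := fst (fst S).
Definition sJ (S : state) : list job := snd (fst S).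
Definition sb (S : state) : nat := snd S.

Definition stepP (pr : nat -> list (tm nt)) (S : state) : list state :=
  filter (fun S' => LB (sJ S') <=? sb S') (step pr S).

Definition lt3 (x y : nat * nat * nat) : Prop :=
  let '(x1, x2, x3) := x in let '(y1, y2, y3) := y in
  x1 < y1 \/ (x1 = y1 /\ (x2 < y2 \/ (x2 = y2 /\ x3 < y3))).

Lemma wf_lt3 : well_founded lt3.
Proof.
  intros [[a b] c]. revert b c.
  induction a as [a IHa] using (well_founded_induction lt_wf).
  intro b. induction b as [b IHb] using (well_founded_induction lt_wf).
  intro c. induction c as [c IHc] using (well_founded_induction lt_wf).
  constructor. intros [[a' b'] c'] H. simpl in H.
  destruct H as [H|[-> [H|[-> H]]]]; auto.
Qed.

Definition mu (S : state) : nat * nat * nat := (sb S, sb S - LB (sJ S), TS (sR S) (sJ S)).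

Lemma rsize_pos R t : 1 <= rsize R t.
Proof. destruct t; simpl; try lia. destruct (sub R p); [apply tsize_pos | lia]. Qed.

Lemma rsize_classify R t a : classify R t = CCon a -> rsize R a = rsize R t.
Proof.
  destruct t; simpl; intro H; try (injection H as <-; reflexivity).
  destruct (sub R p) eqn:E; try discriminate.
  destruct t; try discriminate; injection H as <-; simpl; rewrite ?sub_app; rewrite ?E; simpl; lia.
Qed.

Lemma rsize_repl_var R p Y Z : sub R p = Some (Var Y) ->
  forall t, rsize (repl R p (Var Z)) t = rsize R t.
Proof.
  intros H t; induction t as [q| | | | | | | |]; simpl; auto.
  pose proof (sub_repl_var_size q R p Y Z H) as E.
  destruct (sub (repl R p (Var Z)) q); destruct (sub R q); simpl in E; try discriminate; auto.
  injection E; auto.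
Qed.

Lemma TS_repl_var R p Y Z J : sub R p = Some (Var Y) -> TS (repl R p (Var Z)) J = TS R J.
Proof.
  intros H; induction J; simpl; auto. rewrite IHJ, (rsize_repl_var R p Y Z H). auto.
Qed.

Lemma in_charge c R J b S : In S (charge c R J b) -> c <= b /\ S = (R, J, b - c).
Proof.
  unfold charge. destruct (Nat.leb_spec c b); simpl; intuition.
Qed.

Lemma fire_dec R a s rest J b S : In S (fire R a s rest J b) ->
  sb S < b /\ LB (sJ S) <= LB ((a, s :: rest) :: J) + 1.
Proof.
  destruct a; destruct s; simpl; try contradiction; intro H; apply in_charge in H as [H1 ->];
    unfold sb, sJ; simpl; lia.
Qed.

Lemma idx_dec R a σ J b S : σ <> [] -> In S (idx_step R a σ J b) -> sb S < b.
Proof.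
  destruct σ as [|s rest]; [congruence|]. intros _. unfold idx_step.
  destruct (classify R s) as [p X| s' |]; try contradiction.
  - destruct X; try contradiction. intro H. apply in_flat_map in H as (q & _ & H).
    apply fire_dec in H; tauto.
  - intro H; apply fire_dec in H; tauto.
Qed.

Definition prog (S : state) (R : tm nt) (a : tm path) (σ : list (tm path)) (J : list job) (b : nat) :=
  sb S < b \/ (sb S = b /\ LB (sJ S) = LB ((a, σ) :: J) + 1) \/
  (σ = [] /\ sb S = b /\ LB (sJ S) = LB ((a, σ) :: J) /\ sR S = R /\
   TS R (sJ S) < rsize R a + TS R J).

Lemma con_dec R a σ J b S : In S (con_step R a σ J b) -> prog S R a σ J b.
Proof.
  unfold prog. destruct a; simpl; try contradiction; intro H.
  - apply in_charge in H as [H1 ->]. unfold sb, sJ, sR; simpl.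
    destruct σ; simpl in *; [right; right | left; lia]. repeat split; auto; lia.
  - destruct H as [<-|[]]. unfold sb, sJ, sR; simpl. right; left; split; auto; lia.
  - apply in_charge in H as [H1 ->]. unfold sb, sJ, sR; simpl.
    destruct σ; simpl in *; [right; right | left; lia]. repeat split; auto; lia.
  - destruct σ as [|s rest].
    + destruct H as [<-|[]]. unfold sb, sJ, sR; simpl. right; right. repeat split; auto; lia.
    + left. eapply idx_dec; eauto. congruence.
  - destruct σ as [|s rest].
    + destruct H as [<-|[]]. unfold sb, sJ, sR; simpl. right; right. repeat split; auto; lia.
    + left. eapply idx_dec; eauto. congruence.
Qed.

Lemma step_dec pr S S' : In S' (stepP pr S) -> lt3 (mu S') (mu S).
Proof.
  destruct S as [[R J] b]. unfold stepP. rewrite filter_In. intros [H Hle].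
  apply Nat.leb_le in Hle.
  destruct J as [|[a σ] J]; [simpl in H; contradiction|].
  unfold step in H.
  destruct (classify R a) as [p X|a'|] eqn:Ec; try contradiction.
  - apply classify_hole in Ec as [-> Ep].
    unfold hole_step in H. destruct σ as [|s σ'].
    + destruct X.
      * apply in_map_iff in H as (j & <- & Hj). apply in_seq in Hj.
        unfold mu, sb, sJ, sR in *; simpl in *.
        destruct j as [|j].
        -- right. split; [lia|]. right. split; [lia|].
           rewrite (TS_repl_var R p NT (NG 0) J Ep). rewrite Ep. simpl. lia.
        -- left; lia.
      * contradiction.
      * destruct H as [<-|[]]. unfold mu, sb, sJ, sR in *; simpl in *.
        right. split; [lia|]. right. split; [lia|]. rewrite Ep; simpl; lia.
      * apply in_charge in H as [H1 ->]. unfold mu, sb, sJ, sR in *; simpl in *. match goal with |- context [b - ?k] => destruct k end.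
        -- right. split; [lia|]. right. split; [lia|]. rewrite Ep; simpl; lia.
        -- left; lia.
    + apply in_flat_map in H as (q & _ & H).
      apply con_dec in H. unfold prog, mu, sb, sJ, sR in *.
      destruct S' as [[R' J'] b']; simpl in *.
      destruct H as [H|[[H1 H2]|[H1 _]]]; try discriminate.
      * left; lia.
      * right. split; [lia|]. left. lia.
  - apply con_dec in H. unfold prog, mu, sb, sJ, sR in *.
    destruct S' as [[R' J'] b']; simpl in *.
    pose proof (rsize_classify _ _ _ Ec) as Es.
    destruct H as [H|[[H1 H2]|(H0 & H1 & H2 & H3 & H4)]].
    + left; lia.
    + right. split; [lia|]. left. lia.
    + subst. right. split; [lia|]. right. split; [lia|]. lia.
Qed.

Inductive NR (pr : nat -> list (tm nt)) : state -> tm nt -> Prop :=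
| nr_done R : NR pr (R, [], 0) R
| nr_step S S' Rf : In S' (stepP pr S) -> NR pr S' Rf -> NR pr S Rf.

Definition is_final (S : state) : bool :=
  match S with (_, [], 0) => true | _ => false end.

Lemma step_nil pr R b : step pr (R, [], b) = [].
Proof. reflexivity. Qed.

Lemma NR_inv pr S Rf : NR pr S Rf <->
  ((is_final S = true /\ Rf = sR S) \/ exists S', In S' (stepP pr S) /\ NR pr S' Rf).
Proof.
  split.
  - intro H; inversion H; subst; [left; simpl; auto | right; eauto].
  - intros [[H1 ->]|(S' & H1 & H2)]; [|econstructor; eauto].
    destruct S as [[R [|j J]] [|b]]; simpl in H1; try discriminate. constructor.
Qed.

Definition collect (pr : nat -> list (tm nt)) : forall (L : list state),
  (forall S', In S' L -> {l : list (tm nt) | forall Rf, In Rf l <-> NR pr S' Rf}) ->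
  {l : list (tm nt) | forall Rf, In Rf l <-> exists S', In S' L /\ NR pr S' Rf}.
Proof.
  induction L as [|S0 L IH]; intro H.
  - exists []. intro Rf; split; [intros []| intros (S' & [] & _)].
  - destruct (H S0 (or_introl eq_refl)) as [l0 Hl0].
    destruct (IH (fun S' HS' => H S' (or_intror HS'))) as [l1 Hl1].
    exists (l0 ++ l1). intro Rf. rewrite in_app_iff, Hl0, Hl1. split.
    + intros [H1|(S' & H2 & H3)]. exists S0; split; [left|]; auto. exists S'; split; [right|]; auto.
    + intros (S' & [<-|H2] & H3); eauto.
Defined.

Definition enum (pr : nat -> list (tm nt)) : forall S : state,
  {l : list (tm nt) | forall Rf, In Rf l <-> NR pr S Rf}.
Proof.
  refine (well_founded_induction_type
            (wf_inverse_image state _ lt3 mu wf_lt3) _ _).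
  intros S IH.
  destruct (collect pr (stepP pr S) (fun S' HS' => IH S' (step_dec pr S S' HS'))) as [l Hl].
  exists ((if is_final S then [sR S] else []) ++ l).
  intro Rf. rewrite in_app_iff, Hl, NR_inv.
  destruct (is_final S); simpl; intuition.
Defined.


(** * Part 4: correctness of the symbolic machine *)

Inductive JC (g : gtm) : list job -> nat -> Prop :=
| jc_nil : JC g [] 0
| jc_cons a σ J c1 c2 : Cost (inst g a) (map (inst g) σ) c1 -> JC g J c2 ->
    JC g ((a, σ) :: J) (c1 + c2).

Lemma JC_cons_iff g a σ J b : JC g ((a, σ) :: J) b <->
  exists c1 c2, b = c1 + c2 /\ Cost (inst g a) (map (inst g) σ) c1 /\ JC g J c2.
Proof.
  split; intro H.
  - inversion H; subst; eauto.
  - destruct H as (c1 & c2 & -> & H1 & H2); constructor; auto.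
Qed.

Lemma JC_nil_iff g b : JC g [] b <-> b = 0.
Proof. split; intro H; [inversion H; auto | subst; constructor]. Qed.

Lemma JC_lb g J b : JC g J b -> LB J <= b.
Proof.
  induction 1; simpl; auto. apply Cost_lb in H. rewrite length_map in H. lia.
Qed.

Lemma JC_head g a a' σ σ' J b : inst g a = inst g a' -> map (inst g) σ = map (inst g) σ' ->
  JC g ((a, σ) :: J) b -> JC g ((a', σ') :: J) b.
Proof. intros E1 E2 H. rewrite JC_cons_iff in *. rewrite <- E1, <- E2. auto. Qed.

Lemma Cost_shape t σ c : Cost t σ c ->
  match t with Slash _ | Lift _ | Shift | Var _ => False | _ => True end.
Proof. destruct 1; auto. Qed.

Lemma Cost_idx_stack t s σ c : Cost t (s :: σ) c ->
  match t with Zero | Succ _ => match s with Slash _ | Lift _ | Shift => True | _ => False end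
  | _ => True end.
Proof. intro H; inversion H; subst; auto. Qed.

Lemma subst_shape t : is_subst t -> match t with Slash _ | Lift _ | Shift => True | _ => False end.
Proof. destruct 1; auto. Qed.

Lemma index_cost0 t : is_index t -> Cost t [] 0.
Proof. destruct 1; constructor. Qed.

Definition notNS (X : nt) : Prop := match X with NS => False | _ => True end.

Lemma valid_term X t : notNS X -> valid X t -> is_term t.
Proof. destruct X; simpl; intuition. apply tm_idx; auto. Qed.

Definition hole_le (j : nat) (X : nt) : Prop := match X with NG i => i <= j | _ => True end.

Definition PJ (pr : nat -> list (tm nt)) (j : nat) : Prop :=
  (forall β, In β (pr j) -> forall t, Match β t -> valid (NG j) t) /\
  (forall t, valid (NG j) t -> exists β, In β (pr j) /\ Match β t) /\
  (forall β1 β2 t, In β1 (pr j) -> In β2 (pr j) -> Match β1 t -> Match β2 t -> β1 = β2) /\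
  (forall β, In β (pr j) -> notvar β \/ β = Var NN) /\
  (forall β, In β (pr j) -> allv (hole_le j) β).

Definition CasesOK (X : nt) (cs : list (tm nt)) : Prop :=
  (forall q, In q cs -> notvar q) /\
  (forall q t, In q cs -> Match q t -> valid X t) /\
  (forall t, valid X t -> exists q, In q cs /\ Match q t) /\
  (forall q1 q2 t, In q1 cs -> In q2 cs -> Match q1 t -> Match q2 t -> q1 = q2).

Ltac brute_in :=
  repeat match goal with
  | H : In _ [] |- _ => destruct H
  | H : In _ (_ :: _) |- _ => destruct H as [<-|H]
  | H : _ = _ \/ _ |- _ => destruct H as [<-|H]
  | H : False |- _ => destruct H
  end.

Lemma casesS_ok : CasesOK NS casesS.
Proof.
  unfold casesS; split; [|split; [|split]].
  - intros q Hq; brute_in; simpl; auto; contradiction.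
  - intros q t Hq Hm; brute_in; try contradiction; destruct t; simpl in *; try contradiction;
      constructor; auto.
  - intros t Ht. destruct Ht.
    + exists (Slash (Var NT)); simpl; auto.
    + exists (Lift (Var NS)); simpl; auto.
    + exists Shift; simpl; auto.
  - intros q1 q2 t H1 H2 M1 M2; brute_in; try contradiction; auto;
      destruct t; simpl in *; try contradiction.
Qed.

Lemma casesN_ok : CasesOK NN casesN.
Proof.
  unfold casesN; split; [|split; [|split]].
  - intros q Hq; brute_in; simpl; auto; contradiction.
  - intros q t Hq Hm; brute_in; try contradiction; destruct t; simpl in *; try contradiction;
      constructor; auto.
  - intros t Ht. destruct Ht.
    + exists Zero; simpl; auto.
    + exists (Succ (Var NN)); simpl; auto.
  - intros q1 q2 t H1 H2 M1 M2; brute_in; try contradiction; auto;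
      destruct t; simpl in *; try contradiction.
Qed.

Lemma casesT_ok : CasesOK NT casesT.
Proof.
  unfold casesT; split; [|split; [|split]].
  - intros q Hq; brute_in; simpl; auto; contradiction.
  - intros q t Hq Hm; brute_in; try contradiction; destruct t; simpl in *; try contradiction.
    + apply tm_idx; constructor.
    + apply tm_idx; constructor; auto.
    + apply tm_lam; auto.
    + apply tm_app; tauto.
    + apply tm_clos; tauto.
  - intros t Ht. pose proof (is_term_inv _ Ht) as H'. destruct t; try contradiction.
    + exists (App (Var NT) (Var NT)); simpl; intuition.
    + exists (Clos (Var NT) (Var NS)); simpl; intuition.
    + exists (Lam (Var NT)); simpl; intuition.
    + exists (Succ (Var NN)); simpl; intuition.
    + exists Zero; simpl; intuition.
  - intros q1 q2 t H1 H2 M1 M2; brute_in; try contradiction; auto;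
      destruct t; simpl in *; try contradiction.
Qed.

Lemma casesG_ok pr j : PJ pr j -> CasesOK (NG j) (casesG pr j).
Proof.
  intros (Ha & Hb & Hc & Hd & He).
  assert (Hexp : forall q, In q (casesG pr j) -> exists β, In β (pr j) /\ In q (expandG β) /\
            (forall t, Match q t -> Match β t)).
  { intros q Hq. unfold casesG in Hq. apply in_flat_map in Hq as (β & H1 & H2).
    exists β; split; auto; split; auto.
    destruct β; simpl in H2; try (destruct H2 as [<-|[]]; auto; fail).
    destruct n; simpl in H2; try contradiction.
    intros t Ht. apply (proj1 (proj2 casesN_ok)) with q; auto. }
  split; [|split; [|split]].
  - intros q Hq. destruct (Hexp q Hq) as (β & H1 & H2 & _).
    destruct (Hd β H1) as [Hn| ->].
    + destruct β; simpl in *; try contradiction; destruct H2 as [<-|[]]; simpl; auto.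
    + simpl in H2. destruct H2 as [<-|[<-|[]]]; simpl; auto.
  - intros q t Hq Hm. destruct (Hexp q Hq) as (β & H1 & H2 & H3). eapply Ha; eauto.
  - intros t Ht. destruct (Hb t Ht) as (β & H1 & H2).
    destruct (Hd β H1) as [Hn| ->].
    + exists β; split; auto. unfold casesG. apply in_flat_map. exists β; split; auto.
      destruct β; simpl in *; try contradiction; auto.
    + simpl in H2. destruct ((proj1 (proj2 (proj2 casesN_ok))) t H2) as (q & Hq & Hm).
      exists q; split; auto. unfold casesG. apply in_flat_map. exists (Var NN); split; auto.
  - intros q1 q2 t H1 H2 M1 M2.
    destruct (Hexp q1 H1) as (β1 & B1 & E1 & F1).
    destruct (Hexp q2 H2) as (β2 & B2 & E2 & F2).
    assert (β1 = β2) as <- by (eapply Hc; eauto).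
    destruct (Hd β1 B1) as [Hn| ->].
    + destruct β1; simpl in *; try contradiction;
        destruct E1 as [<-|[]]; destruct E2 as [<-|[]]; auto.
    + simpl in E1, E2. eapply (proj2 (proj2 (proj2 casesN_ok))); eauto.
Qed.

Lemma casesG_holes pr j : PJ pr j -> forall q, In q (casesG pr j) -> allv (hole_le j) q.
Proof.
  intros (Ha & Hb & Hc & Hd & He) q Hq. unfold casesG in Hq.
  apply in_flat_map in Hq as (β & H1 & H2).
  destruct (Hd β H1) as [Hn| ->].
  - destruct β; simpl in *; try contradiction; destruct H2 as [<-|[]]; apply He; auto.
  - simpl in H2. destruct H2 as [<-|[<-|[]]]; simpl; auto.
Qed.

Definition PVJ (R : tm nt) (J : list job) : Prop :=
  Forall (fun jb => allv (okp R) (fst jb) /\ Forall (allv (okp R)) (snd jb)) J.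

Definition HI (k : nat) (R : tm nt) : Prop :=
  allv (fun X => match X with NG j => j < k | _ => True end) R.

Definition Inv (k : nat) (S : state) : Prop :=
  PVJ (sR S) (sJ S) /\ HI k (sR S) /\
  (sb S < k \/ Forall (fun jb => snd jb <> []) (sJ S)).

Lemma okp_repl R p X q : sub R p = Some (Var X) -> forall p', okp R p' -> okp (repl R p q) p'.
Proof. intros H p' H'. unfold okp in *. eapply sub_repl_valid; eauto. Qed.

Lemma PVJ_mono R R' J : (forall p, okp R p -> okp R' p) -> PVJ R J -> PVJ R' J.
Proof.
  intros H. unfold PVJ. apply Forall_impl. intros [a σ] [H1 H2]; simpl in *. split.
  - eapply allv_mono; eauto.
  - eapply Forall_impl; [|eauto]. intros; eapply allv_mono; eauto.
Qed.

Lemma allv_repl {X} (P : X -> Prop) : forall p (R : tm X) q, allv P R -> allv P q -> allv P (repl R p q).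
Proof.
  induction p; intros R q H1 H2; simpl; auto.
  destruct (child R a) eqn:E; auto.
  destruct R; destruct a as [|[|a]]; simpl in *; try discriminate; injection E as <-;
    intuition.
Qed.

Lemma allv_sub {X} (P : X -> Prop) : forall p (R : tm X) u, allv P R -> sub R p = Some u -> allv P u.
Proof.
  induction p; intros R u H1 H2; simpl in *.
  - injection H2 as <-; auto.
  - destruct (child R a) eqn:E; try discriminate.
    assert (allv P t).
    { destruct R; destruct a as [|[|a]]; simpl in *; try discriminate; injection E as <-; intuition. }
    eapply IHp; eauto.
Qed.


Definition isidx (a : tm path) : Prop := match a with Zero | Succ _ => True | _ => False end.

Lemma charge_in_intro c R J b : c <= b -> In (R, J, b - c) (charge c R J b).
Proof. intro H; unfold charge. destruct (Nat.leb_spec c b); [left; auto | lia]. Qed.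

Lemma fire_R R a s rest J b S' : In S' (fire R a s rest J b) -> sR S' = R.
Proof.
  destruct a; destruct s; simpl; try contradiction; intro H; apply in_charge in H as [_ ->]; auto.
Qed.

Lemma fire_uniq R a s rest J b S1 S2 : In S1 (fire R a s rest J b) -> In S2 (fire R a s rest J b) -> S1 = S2.
Proof.
  destruct a; destruct s; simpl; try contradiction; intros H1 H2;
    apply in_charge in H1 as [_ ->]; apply in_charge in H2 as [_ ->]; auto.
Qed.

Lemma fire_sound R a s rest J b S' g : In S' (fire R a s rest J b) ->
  JC g (sJ S') (sb S') -> JC g ((a, s :: rest) :: J) b.
Proof.
  destruct a; destruct s; simpl; try contradiction; intro H; apply in_charge in H as [H1 ->];
    unfold sJ, sb; simpl; intro HJ; rewrite JC_cons_iff in *;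
    destruct HJ as (c1 & c2 & E & HC & HJ); exists (S c1), c2;
    (split; [lia | split; [simpl in *; constructor; auto | auto]]).
Qed.

Lemma fire_complete R a s rest J b g : isidx a -> notvar s ->
  JC g ((a, s :: rest) :: J) b -> exists S', In S' (fire R a s rest J b) /\ JC g (sJ S') (sb S').
Proof.
  intros Ha Hs HJ. rewrite JC_cons_iff in HJ. destruct HJ as (c1 & c2 & E & HC & HJ).
  destruct a; simpl in Ha; try contradiction; destruct s; simpl in Hs; try contradiction;
    simpl in HC; inversion HC; subst;
    (eexists; split; [cbn [fire]; apply charge_in_intro; lia
                     | unfold sJ, sb; simpl; match goal with |- JC _ _ ?x => replace x with (c + c2) by lia end;
                       constructor; auto]).
Qed.

Lemma fire_pv R a s rest J b S' : In S' (fire R a s rest J b) ->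
  allv (okp R) a -> allv (okp R) s -> Forall (allv (okp R)) rest -> PVJ R J -> PVJ R (sJ S').
Proof.
  destruct a; destruct s; simpl; try contradiction; intro H; apply in_charge in H as [H1 ->];
    unfold sJ; simpl; intros Ha Hs Hr HJ; constructor; auto; simpl in *; split; auto;
    repeat (constructor; simpl; auto).
Qed.

Lemma idx_refine R a σ J b S' g : In S' (idx_step R a σ J b) -> Match (sR S') g -> Match R g.
Proof.
  destruct σ as [|s rest]; unfold idx_step; cbv beta iota.
  - intros [<-|[]]; auto.
  - destruct (classify R s) as [p X|s'|] eqn:Ec; try contradiction.
    + destruct X; try contradiction. intro H. apply in_flat_map in H as (q & Hq & H).
      apply fire_R in H. rewrite H. apply classify_hole in Ec as [-> Ep].
      eapply Match_repl_inv; eauto. intros t Ht. eapply (proj1 (proj2 casesS_ok)); eauto.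
    + intro H. apply fire_R in H. rewrite H; auto.
Qed.

Lemma idx_sound R a σ J b S' g : isidx a -> In S' (idx_step R a σ J b) -> Match (sR S') g ->
  JC g (sJ S') (sb S') -> JC g ((a, σ) :: J) b.
Proof.
  intros Ha. destruct σ as [|s rest]; unfold idx_step; cbv beta iota.
  - intros [<-|[]] _. unfold sJ, sb; simpl. intro HJ. replace b with (0 + b) by lia.
    constructor; auto. destruct a; simpl in Ha; try contradiction; constructor.
  - destruct (classify R s) as [p X|s'|] eqn:Ec; try contradiction.
    + destruct X; try contradiction. intro H. apply in_flat_map in H as (q & Hq & H).
      intros HM HJ. pose proof (fire_R _ _ _ _ _ _ _ H) as ER.
      pose proof (fire_sound _ _ _ _ _ _ _ g H HJ) as H'. clear H. rename H' into H.
      apply classify_hole in Ec as [-> Ep].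
      eapply JC_head; [reflexivity| |exact H]. simpl. f_equal.
      rewrite ER in HM. erewrite inst_expose; eauto. eapply sub_repl_same; eauto.
    + intros H HM HJ. pose proof (fire_R _ _ _ _ _ _ _ H) as ER.
      pose proof (fire_sound _ _ _ _ _ _ _ g H HJ) as H'. clear H.
      destruct (classify_con _ _ _ Ec) as (E1 & _ & _).
      eapply JC_head; [reflexivity| |exact H']. simpl. f_equal. apply E1.
      rewrite ER in HM; auto.
Qed.

Lemma notvar_expose p q : notvar q -> notvar (expose p q).
Proof. destruct q; simpl; auto. Qed.

Lemma idx_unique R a σ J b S1 S2 g : In S1 (idx_step R a σ J b) -> In S2 (idx_step R a σ J b) ->
  Match (sR S1) g -> Match (sR S2) g -> S1 = S2.
Proof.
  destruct σ as [|s rest]; unfold idx_step; cbv beta iota.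
  - intros [<-|[]] [<-|[]]; auto.
  - destruct (classify R s) as [p X|s'|] eqn:Ec; try contradiction.
    + destruct X; try contradiction. apply classify_hole in Ec as [-> Ep].
      intros H1 H2 M1 M2.
      apply in_flat_map in H1 as (q1 & Hq1 & H1). apply in_flat_map in H2 as (q2 & Hq2 & H2).
      pose proof (fire_R _ _ _ _ _ _ _ H1) as E1. pose proof (fire_R _ _ _ _ _ _ _ H2) as E2.
      rewrite E1 in M1; rewrite E2 in M2.
      destruct (Match_repl_sub _ _ _ _ _ Ep M1) as (g1 & F1 & N1).
      destruct (Match_repl_sub _ _ _ _ _ Ep M2) as (g2 & F2 & N2).
      rewrite F1 in F2; injection F2 as <-.
      assert (q1 = q2) as <- by (eapply (proj2 (proj2 (proj2 casesS_ok))); eauto).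
      eapply fire_uniq; eauto.
    + intros; eapply fire_uniq; eauto.
Qed.

Lemma idx_complete R a σ J b g : isidx a -> Match R g -> JC g ((a, σ) :: J) b ->
  Forall (allv (okp R)) σ ->
  exists S', In S' (idx_step R a σ J b) /\ Match (sR S') g /\ JC g (sJ S') (sb S').
Proof.
  intros Ha HM HJ HP. destruct σ as [|s rest]; unfold idx_step; cbv beta iota.
  - exists (R, J, b); split; [left; auto|]. unfold sR, sJ, sb; simpl; split; auto.
    rewrite JC_cons_iff in HJ. destruct HJ as (c1 & c2 & -> & HC & HJ).
    destruct a; simpl in Ha; try contradiction; simpl in HC; inversion HC; subst; auto.
  - inversion HP as [|x y Hs Hr]; subst.
    destruct (classify R s) as [p X|s'|] eqn:Ec.
    + apply classify_hole in Ec as [-> Ep].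
      destruct (Match_sub _ _ _ _ HM Ep) as (g' & Eg & Hv). simpl in Hv.
      assert (Hsh : match g' with Slash _ | Lift _ | Shift => True | _ => False end).
      { rewrite JC_cons_iff in HJ. destruct HJ as (c1 & c2 & _ & HC & _).
        simpl in HC. unfold gsub in HC. rewrite Eg in HC.
        apply Cost_idx_stack in HC. destruct a; simpl in Ha; try contradiction; auto. }
      destruct X.
      * apply term_not_subst_shape in Hv. destruct g'; auto; contradiction.
      * destruct ((proj1 (proj2 (proj2 casesS_ok))) g' Hv) as (q & Hq & Hm).
        assert (HM' : Match (repl R p q) g) by (eapply Match_repl; eauto).
        destruct (fire_complete (repl R p q) a (expose p q) rest J b g) as (S' & H1 & H2); auto.
        { apply notvar_expose. eapply (proj1 casesS_ok); eauto. }
        { eapply JC_head; [reflexivity| |exact HJ]. simpl. f_equal.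
          erewrite inst_expose; eauto. eapply sub_repl_same; eauto. }
        exists S'; split; [apply in_flat_map; eauto|]. split; auto.
        rewrite (fire_R _ _ _ _ _ _ _ H1); auto.
      * exfalso. destruct g'; try contradiction; inversion Hv.
      * destruct Hv as [Hv _]. apply term_not_subst_shape in Hv. destruct g'; auto; contradiction.
    + destruct (classify_con _ _ _ Ec) as (E1 & E2 & E3).
      destruct (fire_complete R a s' rest J b g) as (S' & H1 & H2); auto.
      { eapply JC_head; [reflexivity| |exact HJ]. simpl. f_equal. symmetry; apply E1; auto. }
      exists S'; split; auto. split; auto. rewrite (fire_R _ _ _ _ _ _ _ H1); auto.
    + exfalso. eapply classify_bad; eauto.
Qed.

Lemma idx_pv R a σ J b S' : In S' (idx_step R a σ J b) ->
  allv (okp R) a -> Forall (allv (okp R)) σ -> PVJ R J ->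
  PVJ (sR S') (sJ S') /\ (forall p, okp R p -> okp (sR S') p).
Proof.
  destruct σ as [|s rest]; unfold idx_step; cbv beta iota.
  - intros [<-|[]]; unfold sR, sJ; simpl; auto.
  - intros H Ha Hσ HJ. inversion Hσ as [|x y Hs Hr]; subst.
    destruct (classify R s) as [p X|s'|] eqn:Ec; try contradiction.
    + destruct X; try contradiction. apply classify_hole in Ec as [-> Ep].
      apply in_flat_map in H as (q & Hq & H).
      pose proof (fire_R _ _ _ _ _ _ _ H) as ER.
      assert (Hok : forall p', okp R p' -> okp (repl R p q) p') by (eapply okp_repl; eauto).
      rewrite ER. split; auto.
      eapply fire_pv; eauto.
      * eapply allv_mono; eauto.
      * eapply allv_expose. eapply sub_repl_same; eauto.
      * eapply Forall_impl; [|exact Hr]. intros; eapply allv_mono; eauto.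
      * eapply PVJ_mono; eauto.
    + destruct (classify_con _ _ _ Ec) as (E1 & E2 & E3).
      pose proof (fire_R _ _ _ _ _ _ _ H) as ER. rewrite ER. split; auto.
      eapply fire_pv; eauto.
Qed.

Definition HIok (k : nat) (X : nt) : Prop := match X with NG j => j < k | _ => True end.

Lemma idx_HI k R a σ J b S' : In S' (idx_step R a σ J b) -> HI k R -> HI k (sR S').
Proof.
  destruct σ as [|s rest]; unfold idx_step; cbv beta iota.
  - intros [<-|[]]; unfold sR; simpl; auto.
  - intros H HR. destruct (classify R s) as [p X|s'|] eqn:Ec; try contradiction.
    + destruct X; try contradiction.
      apply in_flat_map in H as (q & Hq & H).
      rewrite (fire_R _ _ _ _ _ _ _ H). apply allv_repl; auto.
      unfold casesS in Hq; brute_in; simpl; auto.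
    + rewrite (fire_R _ _ _ _ _ _ _ H); auto.
Qed.

Lemma map_inst_lift g σ : map (inst g) (map Lift σ) = map Lift (map (inst g) σ).
Proof. rewrite !map_map. reflexivity. Qed.

Lemma con_refine R a σ J b S' g : In S' (con_step R a σ J b) -> Match (sR S') g -> Match R g.
Proof.
  destruct a; simpl; try contradiction.
  - intro H; apply in_charge in H as [_ ->]; auto.
  - intros [<-|[]]; auto.
  - intro H; apply in_charge in H as [_ ->]; auto.
  - apply idx_refine.
  - apply idx_refine.
Qed.

Lemma con_sound R a σ J b S' g : In S' (con_step R a σ J b) -> Match (sR S') g ->
  JC g (sJ S') (sb S') -> JC g ((a, σ) :: J) b.
Proof.
  destruct a; cbn [con_step]; try contradiction.
  - intro H; apply in_charge in H as [H1 ->]. unfold sJ, sb; simpl. intros _ HJ.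
    rewrite JC_cons_iff in HJ. destruct HJ as (c1 & c' & E1 & HC1 & HJ).
    rewrite JC_cons_iff in HJ. destruct HJ as (c2 & c3 & E2 & HC2 & HJ).
    rewrite JC_cons_iff. exists (length σ + c1 + c2), c3. split; [lia|]. split; auto.
    simpl. pose proof (c_app _ _ _ _ _ HC1 HC2) as HH. rewrite length_map in HH. exact HH.
  - intros [<-|[]]. unfold sJ, sb; simpl. intros _ HJ.
    rewrite JC_cons_iff in *. destruct HJ as (c1 & c2 & E & HC & HJ).
    exists c1, c2; split; auto. split; auto. simpl. constructor. auto.
  - intro H; apply in_charge in H as [H1 ->]. unfold sJ, sb; simpl. intros _ HJ.
    rewrite JC_cons_iff in *. destruct HJ as (c1 & c2 & E & HC & HJ).
    exists (length σ + c1), c2; split; [lia|]. split; auto.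
    simpl. rewrite map_inst_lift in HC. pose proof (c_lam _ _ _ HC) as HH.
    rewrite length_map in HH. exact HH.
  - intros; eapply idx_sound; eauto; simpl; auto.
  - intros; eapply idx_sound; eauto; simpl; auto.
Qed.

Lemma con_unique R a σ J b S1 S2 g : In S1 (con_step R a σ J b) -> In S2 (con_step R a σ J b) ->
  Match (sR S1) g -> Match (sR S2) g -> S1 = S2.
Proof.
  destruct a; cbn [con_step]; try contradiction.
  - intros H1 H2; apply in_charge in H1 as [_ ->]; apply in_charge in H2 as [_ ->]; auto.
  - intros [<-|[]] [<-|[]]; auto.
  - intros H1 H2; apply in_charge in H1 as [_ ->]; apply in_charge in H2 as [_ ->]; auto.
  - apply idx_unique.
  - apply idx_unique.
Qed.

Lemma con_complete R a σ J b g : notvar a -> Match R g -> JC g ((a, σ) :: J) b ->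
  allv (okp R) a -> Forall (allv (okp R)) σ ->
  exists S', In S' (con_step R a σ J b) /\ Match (sR S') g /\ JC g (sJ S') (sb S').
Proof.
  intros Hv HM HJ Ha Hσ. rewrite JC_cons_iff in HJ. destruct HJ as (c1 & c2 & E & HC & HJ).
  destruct a; simpl in Hv; try contradiction; cbn [con_step].
  - simpl in HC. apply Cost_app_iff in HC as (d1 & d2 & Ed & H1 & H2).
    rewrite length_map in Ed.
    exists (R, (a1, σ) :: (a2, σ) :: J, b - length σ). split; [apply charge_in_intro; lia|].
    unfold sR, sJ, sb; simpl. split; auto.
    replace (b - length σ) with (d1 + (d2 + c2)) by lia.
    constructor; auto. constructor; auto.
  - simpl in HC. apply Cost_clos_inv in HC.
    exists (R, (a1, a2 :: σ) :: J, b). split; [left; auto|].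
    unfold sR, sJ, sb; simpl. split; auto. subst. constructor; auto.
  - simpl in HC. apply Cost_lam_iff in HC as (d & Ed & H1).
    rewrite length_map in Ed. rewrite <- map_inst_lift in H1.
    exists (R, (a, map Lift σ) :: J, b - length σ). split; [apply charge_in_intro; lia|].
    unfold sR, sJ, sb; simpl. split; auto.
    replace (b - length σ) with (d + c2) by lia. constructor; auto.
  - simpl in HC; apply Cost_shape in HC; contradiction.
  - simpl in HC; apply Cost_shape in HC; contradiction.
  - eapply idx_complete; eauto; simpl; auto. subst. constructor; auto.
  - simpl in HC; apply Cost_shape in HC; contradiction.
  - eapply idx_complete; eauto; simpl; auto. subst. constructor; auto.
Qed.

Lemma con_pv R a σ J b S' : In S' (con_step R a σ J b) ->
  allv (okp R) a -> Forall (allv (okp R)) σ -> PVJ R J ->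
  PVJ (sR S') (sJ S') /\ (forall p, okp R p -> okp (sR S') p).
Proof.
  destruct a; cbn [con_step]; try contradiction.
  - intro H; apply in_charge in H as [_ ->]. unfold sR, sJ; simpl. intros [H1 H2] Hσ HJ.
    split; auto. constructor; [simpl; auto|]. constructor; [simpl; auto|]. auto.
  - intros [<-|[]]. unfold sR, sJ; simpl. intros [H1 H2] Hσ HJ.
    split; auto. constructor; [simpl; auto|]. auto.
  - intro H; apply in_charge in H as [_ ->]. unfold sR, sJ; simpl. intros H1 Hσ HJ.
    split; auto. constructor; [simpl; split; auto|]. 2: auto.
    apply Forall_map. eapply Forall_impl; [|exact Hσ]. simpl; auto.
  - intros; eapply idx_pv; eauto.
  - intros; eapply idx_pv; eauto.
Qed.

Lemma con_HI k R a σ J b S' : In S' (con_step R a σ J b) -> HI k R -> HI k (sR S').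
Proof.
  destruct a; cbn [con_step]; try contradiction.
  - intro H; apply in_charge in H as [_ ->]; auto.
  - intros [<-|[]]; auto.
  - intro H; apply in_charge in H as [_ ->]; auto.
  - apply idx_HI.
  - apply idx_HI.
Qed.

Lemma con_bk R a σ J b S' : In S' (con_step R a σ J b) -> σ <> [] ->
  Forall (fun jb => snd jb <> []) J -> sb S' < b \/ Forall (fun jb => snd jb <> []) (sJ S').
Proof.
  intros H Hσ HJ. destruct a; cbn [con_step] in H; try contradiction.
  - apply in_charge in H as [H1 ->]. left. unfold sb; simpl.
    destruct σ; [congruence|]. simpl in *; lia.
  - destruct H as [<-|[]]. right. unfold sJ; simpl. constructor; auto. simpl; congruence.
  - apply in_charge in H as [H1 ->]. left. unfold sb; simpl.
    destruct σ; [congruence|]. simpl in *; lia.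
  - left. eapply idx_dec; eauto.
  - left. eapply idx_dec; eauto.
Qed.


Section Hole.
Variable pr : nat -> list (tm nt).
Variable k : nat.
Hypothesis Hpr : forall j, j < k -> PJ pr j.

Lemma hcases_ok R p X : HI k R -> sub R p = Some (Var X) -> notNS X -> CasesOK X (hcases pr X).
Proof.
  intros HR Ep HX. destruct X; simpl in *; try contradiction.
  - apply casesT_ok.
  - apply casesN_ok.
  - apply casesG_ok. apply Hpr. exact (allv_sub _ p R _ HR Ep).
Qed.

Lemma hcases_HI R p X q : HI k R -> sub R p = Some (Var X) -> In q (hcases pr X) -> HI k q.
Proof.
  intros HR Ep Hq. unfold HI. destruct X; simpl in Hq.
  - unfold casesT in Hq; brute_in; simpl; auto.
  - contradiction.
  - unfold casesN in Hq; brute_in; simpl; auto.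
  - pose proof (allv_sub _ p R _ HR Ep) as Hj. simpl in Hj.
    eapply allv_mono; [|eapply casesG_holes; eauto].
    intros [| | |i]; simpl; auto. lia.
Qed.

Lemma gsub_eq g p g' : sub g p = Some g' -> gsub g p = g'.
Proof. intro E; unfold gsub; rewrite E; auto. Qed.

Lemma hole_refine R p X σ J b S' g : HI k R -> sub R p = Some (Var X) ->
  In S' (hole_step pr R p X σ J b) -> Match (sR S') g -> Match R g.
Proof.
  intros HR Ep. destruct σ as [|s σ']; unfold hole_step; cbv beta iota.
  - destruct X.
    + intro H; apply in_map_iff in H as (j & <- & _). unfold sR; simpl. intro HM.
      eapply Match_repl_inv; eauto. intros t [Ht _]; exact Ht.
    + contradiction.
    + intros [<-|[]]; auto.
    + intro H; apply in_charge in H as [_ ->]; auto.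
  - intros H HM. apply in_flat_map in H as (q & Hq & H).
    assert (HX : notNS X) by (destruct X; simpl in *; auto).
    eapply Match_repl_inv; [exact Ep | | eapply con_refine; eauto].
    intros t; apply (proj1 (proj2 (hcases_ok R p X HR Ep HX))); auto.
Qed.

Lemma hole_sound R p X σ J b S' g : HI k R -> sub R p = Some (Var X) ->
  In S' (hole_step pr R p X σ J b) -> Match (sR S') g -> JC g (sJ S') (sb S') ->
  JC g ((Var p, σ) :: J) b.
Proof.
  intros HR Ep. destruct σ as [|s σ']; unfold hole_step; cbv beta iota.
  - destruct X as [| | |n].
    + intro H; apply in_map_iff in H as (j & <- & Hj). apply in_seq in Hj.
      unfold sR, sJ, sb; simpl. intros HM HJ.
      destruct (Match_repl_sub _ _ _ _ _ Ep HM) as (g' & Eg & [_ Hc]).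
      replace b with (j + (b - j)) by lia. constructor; auto.
      simpl. rewrite (gsub_eq _ _ _ Eg). auto.
    + contradiction.
    + intros [<-|[]]. unfold sR, sJ, sb; simpl. intros HM HJ.
      destruct (Match_sub _ _ _ _ HM Ep) as (g' & Eg & Hv).
      replace b with (0 + b) by lia. constructor; auto.
      simpl. rewrite (gsub_eq _ _ _ Eg). apply index_cost0; auto.
    + intro H; apply in_charge in H as [Hj ->]. unfold sR, sJ, sb; simpl. intros HM HJ.
      destruct (Match_sub _ _ _ _ HM Ep) as (g' & Eg & [_ Hc]).
      replace b with (n + (b - n)) by lia. constructor; auto.
      simpl. rewrite (gsub_eq _ _ _ Eg). auto.
  - intros H HM HJ. apply in_flat_map in H as (q & Hq & H).
    pose proof (con_refine _ _ _ _ _ _ _ H HM) as HM'.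
    pose proof (con_sound _ _ _ _ _ _ _ H HM HJ) as HJ'.
    eapply JC_head; [| reflexivity | exact HJ']. simpl.
    erewrite inst_expose; eauto. eapply sub_repl_same; eauto.
Qed.

Lemma hole_unique R p X σ J b S1 S2 g : HI k R -> sub R p = Some (Var X) ->
  In S1 (hole_step pr R p X σ J b) -> In S2 (hole_step pr R p X σ J b) ->
  Match (sR S1) g -> Match (sR S2) g -> S1 = S2.
Proof.
  intros HR Ep. destruct σ as [|s σ']; unfold hole_step; cbv beta iota.
  - destruct X.
    + intros H1 H2 M1 M2.
      apply in_map_iff in H1 as (j1 & <- & _). apply in_map_iff in H2 as (j2 & <- & _).
      unfold sR in *; simpl in *.
      destruct (Match_repl_sub _ _ _ _ _ Ep M1) as (g1 & F1 & [_ C1]).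
      destruct (Match_repl_sub _ _ _ _ _ Ep M2) as (g2 & F2 & [_ C2]).
      rewrite F1 in F2; injection F2 as <-.
      rewrite (Cost_fun _ _ _ C1 _ C2). auto.
    + contradiction.
    + intros [<-|[]] [<-|[]]; auto.
    + intros H1 H2; apply in_charge in H1 as [_ ->]; apply in_charge in H2 as [_ ->]; auto.
  - intros H1 H2 M1 M2.
    apply in_flat_map in H1 as (q1 & Hq1 & H1). apply in_flat_map in H2 as (q2 & Hq2 & H2).
    assert (HX : notNS X) by (destruct X; simpl in *; auto).
    pose proof (con_refine _ _ _ _ _ _ _ H1 M1) as M1'.
    pose proof (con_refine _ _ _ _ _ _ _ H2 M2) as M2'.
    destruct (Match_repl_sub _ _ _ _ _ Ep M1') as (g1 & F1 & N1).
    destruct (Match_repl_sub _ _ _ _ _ Ep M2') as (g2 & F2 & N2).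
    rewrite F1 in F2; injection F2 as <-.
    assert (q1 = q2) as <-.
    { eapply (proj2 (proj2 (proj2 (hcases_ok R p X HR Ep HX)))); eauto. }
    eapply con_unique; eauto.
Qed.

Lemma hole_complete R p X σ J b g : HI k R -> sub R p = Some (Var X) ->
  Match R g -> JC g ((Var p, σ) :: J) b -> Forall (allv (okp R)) σ ->
  exists S', In S' (hole_step pr R p X σ J b) /\ Match (sR S') g /\ JC g (sJ S') (sb S').
Proof.
  intros HR Ep HM HJ Hσ.
  destruct (Match_sub _ _ _ _ HM Ep) as (g' & Eg & Hv). simpl in Hv.
  pose proof HJ as HJ0.
  rewrite JC_cons_iff in HJ. destruct HJ as (c1 & c2 & E & HC & HJ).
  simpl in HC. rewrite (gsub_eq _ _ _ Eg) in HC.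
  assert (HX : notNS X).
  { destruct X; simpl; auto. apply subst_shape in Hv. apply Cost_shape in HC.
    destruct g'; auto. }
  destruct σ as [|s σ']; unfold hole_step; cbv beta iota.
  - destruct X as [| | |n]; simpl in HX; try contradiction.
    + exists (repl R p (Var (NG c1)), J, b - c1). split.
      * apply in_map_iff. exists c1; split; auto. apply in_seq. lia.
      * unfold sR, sJ, sb; simpl. split.
        -- eapply Match_repl; eauto. simpl. split; auto.
        -- replace (b - c1) with c2 by lia. auto.
    + exists (R, J, b). split; [left; auto|]. unfold sR, sJ, sb; simpl. split; auto.
      rewrite (Cost_fun _ _ _ HC _ (index_cost0 _ Hv)) in E. simpl in E. subst; auto.
    + destruct Hv as [_ Hc]. rewrite (Cost_fun _ _ _ HC _ Hc) in E. subst.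
      exists (R, J, n + c2 - n). split; [apply charge_in_intro; lia|].
      unfold sR, sJ, sb; simpl. split; auto. replace (n + c2 - n) with c2 by lia; auto.
  - destruct ((proj1 (proj2 (proj2 (hcases_ok R p X HR Ep HX)))) g' Hv) as (q & Hq & Hm).
    assert (HM' : Match (repl R p q) g) by (eapply Match_repl; eauto).
    assert (Hsub : sub (repl R p q) p = Some q) by (eapply sub_repl_same; eauto).
    destruct (con_complete (repl R p q) (expose p q) (s :: σ') J b g) as (S' & H1 & H2); auto.
    + apply notvar_expose. eapply (proj1 (hcases_ok R p X HR Ep HX)); eauto.
    + eapply JC_head; [| reflexivity | exact HJ0]. simpl.
      erewrite inst_expose; eauto.
    + eapply allv_expose; eauto.
    + eapply Forall_impl; [|exact Hσ]. intros; eapply allv_mono; [|eauto].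
      eapply okp_repl; eauto.
    + exists S'; split; auto. apply in_flat_map; eauto.
Qed.

Lemma hole_pv R p X σ J b S' : sub R p = Some (Var X) ->
  In S' (hole_step pr R p X σ J b) -> Forall (allv (okp R)) σ -> PVJ R J ->
  PVJ (sR S') (sJ S') /\ (forall p', okp R p' -> okp (sR S') p').
Proof.
  intros Ep. destruct σ as [|s σ']; unfold hole_step; cbv beta iota.
  - destruct X.
    + intro H; apply in_map_iff in H as (j & <- & _). unfold sR, sJ; simpl. intros _ HJ.
      assert (Hok : forall p', okp R p' -> okp (repl R p (Var (NG j))) p') by (eapply okp_repl; eauto).
      split; auto. eapply PVJ_mono; eauto.
    + contradiction.
    + intros [<-|[]]; unfold sR, sJ; simpl; auto.
    + intro H; apply in_charge in H as [_ ->]; unfold sR, sJ; simpl; auto.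
  - intros H Hσ HJ. apply in_flat_map in H as (q & Hq & H).
    assert (Hok : forall p', okp R p' -> okp (repl R p q) p') by (eapply okp_repl; eauto).
    destruct (con_pv _ _ _ _ _ _ H) as [H1 H2].
    + eapply allv_expose. eapply sub_repl_same; eauto.
    + eapply Forall_impl; [|exact Hσ]. intros; eapply allv_mono; eauto.
    + eapply PVJ_mono; eauto.
    + split; auto.
Qed.

Lemma hole_HI R p X σ J b S' : HI k R -> sub R p = Some (Var X) ->
  In S' (hole_step pr R p X σ J b) -> (σ = [] -> b < k) -> HI k (sR S').
Proof.
  intros HR Ep. destruct σ as [|s σ']; unfold hole_step; cbv beta iota.
  - intros H Hb. specialize (Hb eq_refl). destruct X.
    + apply in_map_iff in H as (j & <- & Hj). apply in_seq in Hj. unfold sR; simpl.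
      apply allv_repl; auto. simpl. lia.
    + contradiction.
    + destruct H as [<-|[]]; auto.
    + apply in_charge in H as [_ ->]; auto.
  - intros H _. apply in_flat_map in H as (q & Hq & H).
    eapply con_HI; eauto. apply allv_repl; auto. eapply hcases_HI; eauto.
Qed.

Lemma hole_bk R p X σ J b S' : In S' (hole_step pr R p X σ J b) -> σ <> [] ->
  Forall (fun jb => snd jb <> []) J -> sb S' < b \/ Forall (fun jb => snd jb <> []) (sJ S').
Proof.
  intros H Hσ HJ. destruct σ as [|s σ']; [congruence|].
  unfold hole_step in H; cbv beta iota in H.
  apply in_flat_map in H as (q & Hq & H). eapply con_bk; eauto.
Qed.

End Hole.


Lemma notvar_repl (R : tm nt) p X q : notvar R -> sub R p = Some (Var X) -> notvar (repl R p q).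
Proof.
  intros H1 H2. destruct p as [|i p]; simpl in *.
  - injection H2 as ->. simpl in H1. contradiction.
  - destruct (child R i); auto. destruct R; destruct i as [|[|i]]; simpl in *; auto.
Qed.

Lemma idx_nv R a σ J b S' : In S' (idx_step R a σ J b) -> notvar R -> notvar (sR S').
Proof.
  destruct σ as [|s rest]; unfold idx_step; cbv beta iota.
  - intros [<-|[]]; unfold sR; simpl; auto.
  - intros H HR. destruct (classify R s) as [p X|s'|] eqn:Ec; try contradiction.
    + destruct X; try contradiction. apply classify_hole in Ec as [-> Ep].
      apply in_flat_map in H as (q & Hq & H).
      rewrite (fire_R _ _ _ _ _ _ _ H). eapply notvar_repl; eauto.
    + rewrite (fire_R _ _ _ _ _ _ _ H); auto.
Qed.

Lemma con_nv R a σ J b S' : In S' (con_step R a σ J b) -> notvar R -> notvar (sR S').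
Proof.
  destruct a; cbn [con_step]; try contradiction.
  - intro H; apply in_charge in H as [_ ->]; auto.
  - intros [<-|[]]; auto.
  - intro H; apply in_charge in H as [_ ->]; auto.
  - apply idx_nv.
  - apply idx_nv.
Qed.

Lemma hole_nv pr R p X σ J b S' : sub R p = Some (Var X) ->
  In S' (hole_step pr R p X σ J b) -> notvar R -> notvar (sR S').
Proof.
  intros Ep. destruct σ as [|s σ']; unfold hole_step; cbv beta iota.
  - destruct X.
    + intro H; apply in_map_iff in H as (j & <- & _). unfold sR; simpl. intro.
      eapply notvar_repl; eauto.
    + contradiction.
    + intros [<-|[]]; auto.
    + intro H; apply in_charge in H as [_ ->]; auto.
  - intros H HR. apply in_flat_map in H as (q & Hq & H).
    eapply con_nv; eauto. eapply notvar_repl; eauto.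
Qed.

Section Steps.
Variable pr : nat -> list (tm nt).
Variable k : nat.
Hypothesis Hpr : forall j, j < k -> PJ pr j.

Definition Inv2 (S : state) : Prop :=
  PVJ (sR S) (sJ S) /\ HI k (sR S) /\ notvar (sR S) /\ sb S <= k /\
  (sb S < k \/ Forall (fun jb => snd jb <> []) (sJ S)).

Definition Good (S : state) (g : gtm) : Prop := Match (sR S) g /\ JC g (sJ S) (sb S).

Lemma step_refine S S' g : Inv2 S -> In S' (step pr S) -> Match (sR S') g -> Match (sR S) g.
Proof.
  destruct S as [[R J] b]. intros (HP & HH & _). unfold sR, sJ, sb in *; simpl in *.
  destruct J as [|[a σ] J]; [simpl; contradiction|]. unfold step.
  destruct (classify R a) as [p X|a'|] eqn:Ec; try contradiction.
  - apply classify_hole in Ec as [-> Ep]. intros H HM. eapply hole_refine; eauto.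
  - intros H HM. eapply con_refine; eauto.
Qed.

Lemma step_sound S S' g : Inv2 S -> In S' (step pr S) -> Good S' g -> Good S g.
Proof.
  destruct S as [[R J] b]. intros (HP & HH & _). unfold Good, sR, sJ, sb in *; simpl in *.
  destruct J as [|[a σ] J]; [simpl; contradiction|]. unfold step.
  destruct (classify R a) as [p X|a'|] eqn:Ec; try contradiction.
  - apply classify_hole in Ec as [-> Ep]. intros H [HM HJ].
    split; [eapply hole_refine; eauto | eapply hole_sound; eauto].
  - intros H [HM HJ]. pose proof (con_refine _ _ _ _ _ _ _ H HM) as HM'.
    split; auto. pose proof (con_sound _ _ _ _ _ _ _ H HM HJ) as HJ'.
    destruct (classify_con _ _ _ Ec) as (E1 & _ & _).
    eapply JC_head; [ | reflexivity | exact HJ']. apply E1; auto.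
Qed.

Lemma step_unique S S1 S2 g : Inv2 S -> In S1 (step pr S) -> In S2 (step pr S) ->
  Match (sR S1) g -> Match (sR S2) g -> S1 = S2.
Proof.
  destruct S as [[R J] b]. intros (HP & HH & _). unfold sR, sJ, sb in *; simpl in *.
  destruct J as [|[a σ] J]; [simpl; contradiction|]. unfold step.
  destruct (classify R a) as [p X|a'|] eqn:Ec; try contradiction.
  - apply classify_hole in Ec as [-> Ep]. intros. eapply hole_unique; eauto.
  - intros. eapply con_unique; eauto.
Qed.

Lemma step_complete S g : Inv2 S -> Good S g -> sJ S <> [] ->
  exists S', In S' (stepP pr S) /\ Good S' g.
Proof.
  destruct S as [[R J] b]. intros (HP & HH & _) [HM HJ] Hne. unfold Good, sR, sJ, sb in *; simpl in *.
  destruct J as [|[a σ] J]; [congruence|].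
  inversion HP as [|x y [Ha Hσ] HPJ]; subst. simpl in Ha, Hσ.
  assert (exists S', In S' (step pr (R, (a, σ) :: J, b)) /\ Match (sR S') g /\ JC g (sJ S') (sb S'))
    as (S' & H1 & H2 & H3).
  { unfold step. destruct (classify R a) as [p X|a'|] eqn:Ec.
    - apply classify_hole in Ec as [-> Ep]. eapply hole_complete; eauto.
    - destruct (classify_con _ _ _ Ec) as (E1 & E2 & E3).
      eapply con_complete; eauto. eapply JC_head; [ | reflexivity | exact HJ]. symmetry; auto.
    - exfalso; eapply classify_bad; eauto. }
  exists S'. split; [|split; auto]. unfold stepP. apply filter_In. split; auto.
  apply Nat.leb_le. apply JC_lb in H3. auto.
Qed.

Lemma step_b S S' : In S' (stepP pr S) -> sb S' <= sb S.
Proof.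
  intro H. apply step_dec in H. unfold mu in H. destruct H as [H|[H _]]; lia.
Qed.

Lemma step_inv S S' : Inv2 S -> In S' (stepP pr S) -> Inv2 S'.
Proof.
  intros HI0 H. pose proof (step_b _ _ H) as Hb.
  unfold stepP in H. apply filter_In in H as [H _].
  destruct S as [[R J] b]. destruct HI0 as (HP & HH & HN & Hk & HB).
  unfold Inv2, sR, sJ, sb in *; simpl in *.
  destruct J as [|[a σ] J]; [simpl in H; contradiction|].
  inversion HP as [|x y [Ha Hσ] HPJ]; subst. simpl in Ha, Hσ.
  assert (Hσb : σ = [] -> b < k).
  { intros ->. destruct HB as [HB|HB]; auto. inversion HB; subst. simpl in *. congruence. }
  unfold step in H.
  destruct (classify R a) as [p X|a'|] eqn:Ec; try contradiction.
  - apply classify_hole in Ec as [-> Ep].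
    split; [eapply hole_pv; eauto|]. split; [eapply hole_HI; eauto|].
    split; [eapply hole_nv; eauto|]. split; [lia|].
    destruct HB as [HB|HB]; [left; lia|].
    inversion HB as [|x y Hne HB']; subst. simpl in Hne.
    destruct (hole_bk pr R p X σ J b S' H Hne HB') as [H'|H']; unfold sb, sJ in *; [left; lia | right; auto].
  - destruct (classify_con _ _ _ Ec) as (E1 & E2 & E3).
    split; [eapply con_pv; eauto|]. split; [eapply con_HI; eauto|].
    split; [eapply con_nv; eauto|]. split; [lia|].
    destruct HB as [HB|HB]; [left; lia|].
    inversion HB as [|x y Hne HB']; subst. simpl in Hne.
    destruct (con_bk R a' σ J b S' H Hne HB') as [H'|H']; unfold sb, sJ in *; [left; lia | right; auto].
Qed.

Lemma NR_sound S Rf g : NR pr S Rf -> Inv2 S -> Match Rf g -> Good S g.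
Proof.
  induction 1 as [R|S S' Rf H1 H2 IH]; intros HI0 HM.
  - split; auto. constructor.
  - apply (step_sound S S' g HI0).
    + unfold stepP in H1. apply filter_In in H1; tauto.
    + apply IH; auto. eapply step_inv; eauto.
Qed.

Lemma NR_complete S g : Inv2 S -> Good S g -> exists Rf, NR pr S Rf /\ Match Rf g.
Proof.
  revert S. refine (well_founded_ind (wf_inverse_image state _ lt3 mu wf_lt3) _ _).
  intros S IH HI0 HG.
  destruct S as [[R J] b]. destruct J as [|jb J].
  - destruct HG as [HM HJ]. unfold sJ, sb in HJ; simpl in HJ. apply JC_nil_iff in HJ. subst.
    exists R. split; [constructor | auto].
  - destruct (step_complete _ g HI0 HG) as (S' & H1 & H2). unfold sJ; simpl; congruence.
    destruct (IH S' (step_dec _ _ _ H1) (step_inv _ _ HI0 H1) H2) as (Rf & H3 & H4).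
    exists Rf. split; auto. econstructor; eauto.
Qed.

Lemma NR_unique S R1 R2 g : NR pr S R1 -> Inv2 S -> NR pr S R2 -> Match R1 g -> Match R2 g -> R1 = R2.
Proof.
  induction 1 as [R|S S1 Rf H1 H2 IH]; intros HI0 HN2 M1 M2.
  - inversion HN2; subst; auto. unfold stepP in H; simpl in H. contradiction.
  - inversion HN2 as [R|S0 S2 Rf2 H3 H4]; subst.
    + unfold stepP in H1; simpl in H1. contradiction.
    + assert (HI1 : Inv2 S1) by (eapply step_inv; eauto).
      assert (HI2 : Inv2 S2) by exact (step_inv S S2 HI0 H3).
      destruct (NR_sound _ _ _ H2 HI1 M1) as [N1 _].
      destruct (NR_sound _ _ _ H4 HI2 M2) as [N2 _].
      assert (S1 = S2) as <-.
      { unfold stepP in H1, H3. apply filter_In in H1 as [H1 _]. apply filter_In in H3 as [H3 _].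
        exact (step_unique S S1 S2 g HI0 H1 H3 N1 N2). }
      eapply IH; eauto.
Qed.

Lemma NR_shape S Rf : NR pr S Rf -> Inv2 S -> HI k Rf /\ notvar Rf.
Proof.
  induction 1 as [R|S S' Rf H1 H2 IH]; intros HI0.
  - destruct HI0 as (_ & HH & HN & _). auto.
  - apply IH. eapply step_inv; eauto.
Qed.

End Steps.


(** * Part 5: building the levels *)

Definition R0 : tm nt := Clos (Var NT) (Var NS).
Definition S0 (k : nat) : state := (R0, [(Var [0], [Var [1]])], k).

Definition narrow (pr : nat -> list (tm nt)) (k : nat) : list (tm nt) := proj1_sig (enum pr (S0 k)).

Lemma narrow_spec pr k Rf : In Rf (narrow pr k) <-> NR pr (S0 k) Rf.
Proof. unfold narrow. destruct (enum pr (S0 k)) as [l Hl]. simpl. apply Hl. Qed.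

Definition base (k : nat) : list (tm nt) :=
  Lam (Var (NG k)) :: map (fun i => App (Var (NG i)) (Var (NG (k - i)))) (seq 0 (S k)) ++
  (if k =? 0 then [Var NN] else []).

Definition prods_at (pr : nat -> list (tm nt)) (k : nat) : list (tm nt) := base k ++ narrow pr k.

Fixpoint levels (n : nat) : list (list (tm nt)) :=
  match n with
  | 0 => [prods_at (fun _ => []) 0]
  | S m => levels m ++ [prods_at (fun j => nth j (levels m) []) (S m)]
  end.

Definition prods (n : nat) : list (tm nt) := nth n (levels n) [].

Definition prevpr (k : nat) : nat -> list (tm nt) :=
  match k with 0 => fun _ => [] | S m => fun j => nth j (levels m) [] end.

Lemma levels_length n : length (levels n) = S n.
Proof. induction n; simpl; auto. rewrite length_app, IHn. simpl. lia. Qed.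

Lemma levels_prefix : forall n j, j <= n -> nth j (levels n) [] = prods j.
Proof.
  induction n; intros j Hj.
  - assert (j = 0) as -> by lia. reflexivity.
  - destruct (Nat.eq_dec j (S n)) as [->|Hne]; [reflexivity|].
    simpl. rewrite app_nth1 by (rewrite levels_length; lia). apply IHn. lia.
Qed.

Lemma prods_eq k : prods k = prods_at (prevpr k) k.
Proof.
  destruct k; unfold prods; simpl; auto.
  rewrite app_nth2 by (rewrite levels_length; lia). rewrite levels_length.
  replace (S k - S k) with 0 by lia. reflexivity.
Qed.

Lemma prevpr_eq k j : j < k -> prevpr k j = prods j.
Proof. destruct k; simpl; intro H; [lia|]. apply levels_prefix. lia. Qed.

Lemma PJ_ext pr pr' j : pr j = pr' j -> PJ pr j -> PJ pr' j.
Proof. intros E H. unfold PJ in *. rewrite <- E. exact H. Qed.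

Section Level.
Variable pr : nat -> list (tm nt).
Variable k : nat.
Hypothesis Hpr : forall j, j < k -> PJ pr j.

Lemma S0_inv : Inv2 k (S0 k).
Proof.
  unfold Inv2, S0, sR, sJ, sb; simpl. repeat split; auto.
  - constructor; [|constructor]. simpl. unfold okp; simpl. split; [congruence|].
    constructor; [|constructor]. simpl. congruence.
  - right. constructor; [|constructor]. simpl. congruence.
Qed.

Lemma Good_S0 g : Good (S0 k) g <-> exists a s, g = Clos a s /\ is_term a /\ is_subst s /\ Cost g [] k.
Proof.
  unfold Good, S0, sR, sJ, sb; simpl. split.
  - intros [HM HJ]. destruct g; simpl in HM; try contradiction. destruct HM as [H1 H2].
    exists g1, g2. split; auto. split; auto. split; auto.
    rewrite JC_cons_iff in HJ. destruct HJ as (c1 & c2 & E & HC & HJ).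
    apply JC_nil_iff in HJ. subst. unfold gsub in HC; simpl in HC.
    constructor. replace (c1 + 0) with c1 by lia. auto.
  - intros (a & s & -> & H1 & H2 & H3). simpl. split; auto.
    replace k with (k + 0) by lia. constructor; [|constructor].
    unfold gsub; simpl. apply Cost_clos_inv; auto.
Qed.

Lemma narrow_sound β t : In β (narrow pr k) -> Match β t ->
  exists a s, t = Clos a s /\ is_term a /\ is_subst s /\ Cost t [] k.
Proof.
  intros H HM. apply narrow_spec in H. apply Good_S0.
  eapply (NR_sound pr k Hpr); eauto. apply S0_inv.
Qed.

Lemma narrow_complete a s : is_term a -> is_subst s -> Cost (Clos a s) [] k ->
  exists β, In β (narrow pr k) /\ Match β (Clos a s).
Proof.
  intros H1 H2 H3.
  destruct (NR_complete pr k Hpr (S0 k) (Clos a s) S0_inv) as (Rf & HN & HM).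
  - apply Good_S0. eauto 10.
  - exists Rf; split; auto. apply narrow_spec; auto.
Qed.

Lemma narrow_unique β1 β2 t : In β1 (narrow pr k) -> In β2 (narrow pr k) -> Match β1 t -> Match β2 t ->
  β1 = β2.
Proof.
  intros H1 H2 M1 M2. apply narrow_spec in H1. apply narrow_spec in H2.
  eapply (NR_unique pr k Hpr); eauto. apply S0_inv.
Qed.

Lemma narrow_shape β : In β (narrow pr k) -> HI k β /\ notvar β.
Proof.
  intro H. apply narrow_spec in H. eapply (NR_shape pr k Hpr); eauto. apply S0_inv.
Qed.

Lemma in_base β : In β (base k) ->
  β = Lam (Var (NG k)) \/ (exists i, i <= k /\ β = App (Var (NG i)) (Var (NG (k - i)))) \/
  (k = 0 /\ β = Var NN).
Proof.
  unfold base. intros [<-|H]; auto. apply in_app_iff in H as [H|H].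
  - apply in_map_iff in H as (i & <- & Hi). apply in_seq in Hi. right; left. exists i; split; auto; lia.
  - destruct (Nat.eqb_spec k 0); simpl in H; try contradiction. destruct H as [<-|[]]; auto.
Qed.

Lemma base_sound β t : In β (base k) -> Match β t -> valid (NG k) t.
Proof.
  intros H HM. apply in_base in H as [->|[(i & Hi & ->)|[-> ->]]]; simpl in *.
  - destruct t; simpl in HM; try contradiction. destruct HM as [H1 H2].
    split; [apply tm_lam; auto|]. apply (c_lam _ [] k). auto.
  - destruct t; simpl in HM; try contradiction. destruct HM as [[H1 H2] [H3 H4]].
    split; [apply tm_app; auto|]. replace k with (length (@nil gtm) + i + (k - i)) by (simpl; lia).
    constructor; auto.
  - split; [apply tm_idx; auto | apply index_cost0; auto].
Qed.

Lemma kind_lemma β t : In β (prods_at pr k) -> Match β t ->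
  (β = Lam (Var (NG k)) /\ exists u, t = Lam u) \/
  ((exists i, i <= k /\ β = App (Var (NG i)) (Var (NG (k - i)))) /\ exists u v, t = App u v) \/
  (β = Var NN /\ is_index t) \/
  (In β (narrow pr k) /\ exists a s, t = Clos a s).
Proof.
  intros H HM. unfold prods_at in H. apply in_app_iff in H as [H|H].
  - apply in_base in H as [->|[(i & Hi & ->)|[-> ->]]].
    + left. split; auto. destruct t; simpl in HM; try contradiction; eauto.
    + right; left. split; eauto. destruct t; simpl in HM; try contradiction; eauto.
    + right; right; left. split; auto.
  - right; right; right. split; auto. destruct (narrow_sound β t H HM) as (a & s & -> & _). eauto.
Qed.

Theorem level_PJ : PJ (fun _ => prods_at pr k) k.
Proof.
  unfold PJ; cbv beta. split; [|split; [|split; [|split]]].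
  - intros β H t HM. unfold prods_at in H. apply in_app_iff in H as [H|H].
    + eapply base_sound; eauto.
    + destruct (narrow_sound β t H HM) as (a & s & -> & H1 & H2 & H3).
      split; auto. apply tm_clos; auto.
  - intros t [Ht Hc]. pose proof (is_term_inv _ Ht) as H'. destruct t; simpl in H'; try contradiction.
    + apply Cost_app_iff in Hc as (c1 & c2 & E & H1 & H2). simpl in E.
      exists (App (Var (NG c1)) (Var (NG (k - c1)))). split.
      * unfold prods_at, base. apply in_app_iff; left. right. apply in_app_iff; left.
        apply in_map_iff. exists c1; split; auto. apply in_seq; lia.
      * simpl. replace (k - c1) with c2 by lia. tauto.
    + destruct H' as [H1 H2]. destruct (narrow_complete t1 t2 H1 H2 Hc) as (β & Hb & Hm).
      exists β; split; auto. unfold prods_at; apply in_app_iff; right; auto.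
    + apply Cost_lam_iff in Hc as (c & E & H1). simpl in E; subst.
      exists (Lam (Var (NG c))); split; [unfold prods_at, base; left; auto|]. simpl; auto.
    + inversion Hc; subst. exists (Var NN). split; [|simpl; constructor; auto].
      unfold prods_at, base. apply in_app_iff; left. right. apply in_app_iff; right. simpl; auto.
    + inversion Hc; subst. exists (Var NN). split; [|simpl; constructor; auto].
      unfold prods_at, base. apply in_app_iff; left. right. apply in_app_iff; right. simpl; auto.
  - intros β1 β2 t H1 H2 M1 M2.
    destruct (kind_lemma β1 t H1 M1) as [[-> (u & ->)]|[[(i & Hi & ->) (u & v & ->)]|[[-> Hx]|[Hn (a & s & ->)]]]];
    destruct (kind_lemma β2 _ H2 M2) as [[-> (u' & E)]|[[(i' & Hi' & ->) (u' & v' & E)]|[[-> Hx']|[Hn' (a' & s' & E)]]]];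
    try discriminate; auto;
    try (subst; inversion Hx; fail); try (subst; inversion Hx'; fail).
    + simpl in M1, M2. destruct M1 as [[_ C1] _]. destruct M2 as [[_ C2] _].
      rewrite (Cost_fun _ _ _ C1 _ C2). auto.
    + eapply narrow_unique; eauto.
  - intros β H. unfold prods_at in H. apply in_app_iff in H as [H|H].
    + apply in_base in H as [->|[(i & Hi & ->)|[-> ->]]]; simpl; auto.
    + left. apply narrow_shape; auto.
  - intros β H. unfold prods_at in H. apply in_app_iff in H as [H|H].
    + apply in_base in H as [->|[(i & Hi & ->)|[-> ->]]]; simpl; auto. split; lia.
    + apply narrow_shape in H as [H _]. eapply allv_mono; [|exact H].
      intros [| | |j]; simpl; auto. lia.
Qed.

End Level.

Theorem all_PJ : forall k, PJ prods k.
Proof.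
  intro k. induction k as [k IH] using (well_founded_induction lt_wf).
  assert (Hpr : forall j, j < k -> PJ (prevpr k) j).
  { intros j Hj. apply PJ_ext with prods. symmetry; apply prevpr_eq; auto. apply IH; auto. }
  pose proof (level_PJ (prevpr k) k Hpr) as H.
  eapply PJ_ext; [|exact H]. simpl. symmetry. apply prods_eq.
Qed.


From Stdlib Require Import Program.Equality Eqdep_dec Bool.

(** * Part 6: the grammar *)

Definition Gram (n : nat) : productions :=
  Lambda_prods ++ flat_map (fun k => map (fun β => (NG k, β)) (prods k)) (seq 0 (S n)).

Lemma in_Gram n X β : In (X, β) (Gram n) <->
  In (X, β) Lambda_prods \/ (exists k, k <= n /\ X = NG k /\ In β (prods k)).
Proof.
  unfold Gram. rewrite in_app_iff, in_flat_map. split.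
  - intros [H|(k & Hk & H)]; auto. apply in_map_iff in H as (β' & E & H).
    injection E as <- <-. apply in_seq in Hk. right. exists k; split; [lia|]. auto.
  - intros [H|(k & Hk & -> & H)]; auto. right. exists k. split; [apply in_seq; lia|].
    apply in_map_iff. eauto.
Qed.

Lemma inb_In p P : inb p P = true <-> In p P.
Proof. unfold inb. destruct (in_dec prod_eq_dec p P); split; auto; discriminate. Qed.

Lemma Lambda_NG k β : ~ In (NG k, β) Lambda_prods.
Proof. unfold Lambda_prods; simpl; intuition discriminate. Qed.

Lemma in_Gram_NG n k β : In (NG k, β) (Gram n) <-> k <= n /\ In β (prods k).
Proof.
  rewrite in_Gram. split.
  - intros [H|(k' & H1 & E & H2)]; [apply Lambda_NG in H; contradiction|]. injection E as <-. auto.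
  - intros [H1 H2]. right. eauto.
Qed.

Lemma valid_prod n X β t : In (X, β) (Gram n) -> Match β t -> valid X t.
Proof.
  rewrite in_Gram. intros [H|(k & Hk & -> & H)] HM.
  - unfold Lambda_prods in H; simpl in H.
    repeat (destruct H as [H|H]; [injection H as <- <-|]); try contradiction;
      destruct t; simpl in *; try contradiction; intuition;
      try (apply tm_idx; auto; fail); first [apply tm_lam; auto | apply tm_app; auto | apply tm_clos; auto | constructor; auto].
  - destruct (all_PJ k) as (Ha & _). eapply Ha; eauto.
Qed.

Lemma deriv_sound n : forall β t, deriv (Gram n) β t -> Match β t.
Proof.
  intros β t d. induction d; simpl; auto.
  apply inb_In in e. eapply valid_prod; eauto.
Qed.

Definition ntn (n : nat) (X : nt) : Prop := nt_of n X.

Lemma prod_exists n X t : nt_of n X -> valid X t ->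
  exists β, In (X, β) (Gram n) /\ Match β t /\ (notvar β \/ β = Var NN) /\ allv (nt_of n) β.
Proof.
  intros HX Hv. destruct X as [| | |k]; simpl in Hv.
  - pose proof (is_term_inv _ Hv) as H'. destruct t; simpl in H'; try contradiction.
    + exists (App (Var NT) (Var NT)). rewrite in_Gram. unfold Lambda_prods. simpl; intuition.
    + exists (Clos (Var NT) (Var NS)). rewrite in_Gram. unfold Lambda_prods. simpl; intuition.
    + exists (Lam (Var NT)). rewrite in_Gram. unfold Lambda_prods. simpl; intuition.
    + exists (Var NN). rewrite in_Gram. unfold Lambda_prods. simpl; intuition; constructor; auto.
    + exists (Var NN). rewrite in_Gram. unfold Lambda_prods. simpl; intuition; constructor.
  - destruct Hv.
    + exists (Slash (Var NT)). rewrite in_Gram. unfold Lambda_prods. simpl; intuition.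
    + exists (Lift (Var NS)). rewrite in_Gram. unfold Lambda_prods. simpl; intuition.
    + exists Shift. rewrite in_Gram. unfold Lambda_prods. simpl; intuition.
  - destruct Hv.
    + exists Zero. rewrite in_Gram. unfold Lambda_prods. simpl; intuition.
    + exists (Succ (Var NN)). rewrite in_Gram. unfold Lambda_prods. simpl; intuition.
  - destruct (all_PJ k) as (Ha & Hb & Hc & Hd & He).
    destruct (Hb t Hv) as (β & H1 & H2). exists β. split; [apply in_Gram_NG; auto|].
    split; auto. split; auto. eapply allv_mono; [|apply He; auto].
    intros [| | |i]; simpl in *; auto. lia.
Qed.

Lemma md n : forall β t, Match β t -> allv (nt_of n) β ->
  (forall X t', tsize t' <= tsize t -> nt_of n X -> valid X t' -> inhabited (deriv (Gram n) (Var X) t')) ->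
  inhabited (deriv (Gram n) β t).
Proof.
  induction β; intros t HM HA HH; destruct t; simpl in HM, HA; try contradiction;
    try (apply HH; auto; fail);
    try (constructor; constructor; fail).
  - destruct HM as [M1 M2]; destruct HA as [A1 A2].
    destruct (IHβ1 t1 M1 A1) as [d1]; [intros; apply HH; simpl; auto; lia|].
    destruct (IHβ2 t2 M2 A2) as [d2]; [intros; apply HH; simpl; auto; lia|].
    constructor. apply d_app; auto.
  - destruct HM as [M1 M2]; destruct HA as [A1 A2].
    destruct (IHβ1 t1 M1 A1) as [d1]; [intros; apply HH; simpl; auto; lia|].
    destruct (IHβ2 t2 M2 A2) as [d2]; [intros; apply HH; simpl; auto; lia|].
    constructor. apply d_clos; auto.
  - destruct (IHβ t HM HA) as [d1]; [intros; apply HH; simpl; auto; lia|]. constructor. apply d_lam; auto.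
  - destruct (IHβ t HM HA) as [d1]; [intros; apply HH; simpl; auto; lia|]. constructor. apply d_slash; auto.
  - destruct (IHβ t HM HA) as [d1]; [intros; apply HH; simpl; auto; lia|]. constructor. apply d_lift; auto.
  - destruct (IHβ t HM HA) as [d1]; [intros; apply HH; simpl; auto; lia|]. constructor. apply d_succ; auto.
Qed.

Lemma md_con n β t : notvar β -> Match β t -> allv (nt_of n) β ->
  (forall X t', tsize t' < tsize t -> nt_of n X -> valid X t' -> inhabited (deriv (Gram n) (Var X) t')) ->
  inhabited (deriv (Gram n) β t).
Proof.
  intros Hv HM HA HH. destruct β; destruct t; simpl in Hv, HM, HA; try contradiction;
    try (constructor; constructor; fail).
  - destruct HM as [M1 M2]; destruct HA as [A1 A2].
    destruct (md n β1 t1 M1 A1) as [d1]; [intros; apply HH; simpl; auto; lia|].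
    destruct (md n β2 t2 M2 A2) as [d2]; [intros; apply HH; simpl; auto; lia|].
    constructor. apply d_app; auto.
  - destruct HM as [M1 M2]; destruct HA as [A1 A2].
    destruct (md n β1 t1 M1 A1) as [d1]; [intros; apply HH; simpl; auto; lia|].
    destruct (md n β2 t2 M2 A2) as [d2]; [intros; apply HH; simpl; auto; lia|].
    constructor. apply d_clos; auto.
  - destruct (md n β t HM HA) as [d1]; [intros; apply HH; simpl; auto; lia|]. constructor. apply d_lam; auto.
  - destruct (md n β t HM HA) as [d1]; [intros; apply HH; simpl; auto; lia|]. constructor. apply d_slash; auto.
  - destruct (md n β t HM HA) as [d1]; [intros; apply HH; simpl; auto; lia|]. constructor. apply d_lift; auto.
  - destruct (md n β t HM HA) as [d1]; [intros; apply HH; simpl; auto; lia|]. constructor. apply d_succ; auto.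
Qed.

Lemma nn_deriv n t : is_index t -> inhabited (deriv (Gram n) (Var NN) t).
Proof.
  induction 1.
  - constructor. apply (d_var _ NN Zero Zero); [|constructor].
    apply inb_In, in_Gram. left. unfold Lambda_prods; simpl; intuition.
  - destruct IHis_index as [d]. constructor. apply (d_var _ NN (Succ (Var NN)) (Succ n0)).
    + apply inb_In, in_Gram. left. unfold Lambda_prods; simpl; intuition.
    + apply d_succ; auto.
Qed.

Lemma deriv_complete n : forall t X, nt_of n X -> valid X t -> inhabited (deriv (Gram n) (Var X) t).
Proof.
  intro t. pattern t. apply (well_founded_induction (wf_inverse_image _ _ lt (@tsize novar) lt_wf)).
  clear t. intros t IH.
  intros X HX Hv.
  destruct (prod_exists n X t HX Hv) as (β & H1 & H2 & [H3|E3] & H4).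
  - destruct (md_con n β t H3 H2 H4) as [d].
    + intros Y t' Hs HY Hv'. apply IH; auto.
    + constructor. apply (d_var _ X β t); auto. apply inb_In; auto.
  - subst β. destruct (nn_deriv n t H2) as [d]. constructor. apply (d_var _ X (Var NN) t); auto.
    apply inb_In; auto.
Qed.


From Stdlib Require Import Program.Equality Eqdep_dec Bool.

Lemma prod_disjoint n X β1 β2 t : In (X, β1) (Gram n) -> In (X, β2) (Gram n) ->
  Match β1 t -> Match β2 t -> β1 = β2.
Proof.
  intros H1 H2 M1 M2. destruct X as [| | |k].
  - rewrite in_Gram in H1, H2.
    destruct H1 as [H1|(k & _ & E & _)]; [|discriminate].
    destruct H2 as [H2|(k & _ & E & _)]; [|discriminate].
    unfold Lambda_prods in H1, H2; simpl in H1, H2.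
    repeat (destruct H1 as [E1|H1]; [injection E1; intros; subst|]); try contradiction;
    repeat (destruct H2 as [E2|H2]; [injection E2; intros; subst|]); try contradiction;
    try discriminate; auto;
    destruct t; simpl in M1, M2; try contradiction; inversion M1; inversion M2.
  - rewrite in_Gram in H1, H2.
    destruct H1 as [H1|(k & _ & E & _)]; [|discriminate].
    destruct H2 as [H2|(k & _ & E & _)]; [|discriminate].
    unfold Lambda_prods in H1, H2; simpl in H1, H2.
    repeat (destruct H1 as [E1|H1]; [injection E1; intros; subst|]); try contradiction;
    repeat (destruct H2 as [E2|H2]; [injection E2; intros; subst|]); try contradiction;
    try discriminate; auto;
    destruct t; simpl in M1, M2; try contradiction.
  - rewrite in_Gram in H1, H2.
    destruct H1 as [H1|(k & _ & E & _)]; [|discriminate].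
    destruct H2 as [H2|(k & _ & E & _)]; [|discriminate].
    unfold Lambda_prods in H1, H2; simpl in H1, H2.
    repeat (destruct H1 as [E1|H1]; [injection E1; intros; subst|]); try contradiction;
    repeat (destruct H2 as [E2|H2]; [injection E2; intros; subst|]); try contradiction;
    try discriminate; auto;
    destruct t; simpl in M1, M2; try contradiction.
  - apply in_Gram_NG in H1 as [_ H1]. apply in_Gram_NG in H2 as [_ H2].
    destruct (all_PJ k) as (_ & _ & Hc & _). eapply Hc; eauto.
Qed.

Lemma prod_shape n X β : In (X, β) (Gram n) -> notvar β \/ β = Var NN.
Proof.
  rewrite in_Gram. intros [H|(k & _ & -> & H)].
  - unfold Lambda_prods in H; simpl in H.
    repeat (destruct H as [E|H]; [injection E; intros; subst; simpl; auto|]); contradiction.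
  - destruct (all_PJ k) as (_ & _ & _ & Hd & _). auto.
Qed.

Definition UV (n : nat) (X : nt) (t : gtm) : Prop := forall e1 e2 : deriv (Gram n) (Var X) t, e1 = e2.

Lemma pat_unique n : forall β t (d1 d2 : deriv (Gram n) β t),
  (forall X t', tsize t' <= tsize t -> UV n X t') -> d1 = d2.
Proof.
  intros β t d1. induction d1; intros d2 H; dependent destruction d2.
  - apply H; lia.
  - f_equal; [apply IHd1_1 | apply IHd1_2]; intros; apply H; simpl; lia.
  - f_equal; [apply IHd1_1 | apply IHd1_2]; intros; apply H; simpl; lia.
  - f_equal; apply IHd1; intros; apply H; simpl; lia.
  - f_equal; apply IHd1; intros; apply H; simpl; lia.
  - f_equal; apply IHd1; intros; apply H; simpl; lia.
  - f_equal; apply IHd1; intros; apply H; simpl; lia.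
  - reflexivity.
  - reflexivity.
Qed.

Lemma pat_unique_con n β t : notvar β ->
  (forall X t', tsize t' < tsize t -> UV n X t') -> forall d1 d2 : deriv (Gram n) β t, d1 = d2.
Proof.
  intros Hv H d1. destruct d1; simpl in Hv; try contradiction; intro d2; dependent destruction d2.
  - f_equal; apply pat_unique; intros; apply H; simpl; lia.
  - f_equal; apply pat_unique; intros; apply H; simpl; lia.
  - f_equal; apply pat_unique; intros; apply H; simpl; lia.
  - f_equal; apply pat_unique; intros; apply H; simpl; lia.
  - f_equal; apply pat_unique; intros; apply H; simpl; lia.
  - f_equal; apply pat_unique; intros; apply H; simpl; lia.
  - reflexivity.
  - reflexivity.
Qed.

Lemma UV_step n X t : (forall Y t', tsize t' < tsize t -> UV n Y t') ->
  (UV n NN t) -> UV n X t.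
Proof.
  intros IH HNN e1 e2.
  dependent destruction e1. dependent destruction e2.
  rename e into i1, e3 into i2, e1 into d1, e2 into d2.
  assert (beta = beta0) as <-.
  { apply inb_In in i1. apply inb_In in i2. eapply prod_disjoint; eauto; eapply deriv_sound; eauto. }
  assert (i1 = i2) as <- by apply (UIP_dec bool_dec).
  f_equal.
  apply inb_In in i1. destruct (prod_shape n X beta i1) as [Hv| ->].
  - apply pat_unique_con; auto.
  - apply HNN.
Qed.

Lemma NN_notvar n β : In (NN, β) (Gram n) -> notvar β.
Proof.
  rewrite in_Gram. intros [H|(k & _ & E & _)]; [|discriminate].
  unfold Lambda_prods in H; simpl in H.
  repeat (destruct H as [E|H]; [injection E; intros; subst; simpl; auto; try discriminate|]);
    contradiction.
Qed.

Lemma UV_all n : forall t X, UV n X t.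
Proof.
  intro t. pattern t. apply (well_founded_induction (wf_inverse_image _ _ lt (@tsize novar) lt_wf)).
  clear t. intros t IH X.
  assert (HNN : UV n NN t).
  { intros e1 e2. dependent destruction e1. dependent destruction e2.
    rename e into i1, e3 into i2, e1 into d1, e2 into d2.
    assert (beta = beta0) as <-.
    { apply inb_In in i1. apply inb_In in i2. eapply prod_disjoint; eauto; eapply deriv_sound; eauto. }
    assert (i1 = i2) as <- by apply (UIP_dec bool_dec).
    f_equal. apply inb_In in i1.
    apply pat_unique_con; auto. eapply NN_notvar; eauto. }
  apply UV_step; auto.
Qed.


Lemma occurs_allv (P : nt -> Prop) : forall α Y, allv P α -> occurs Y α -> P Y.
Proof. induction α; intros Y H1 H2; simpl in *; try subst; intuition eauto. Qed.

Lemma prods_shape k α : In α (prods k) ->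
  α = Lam (Var (NG k)) \/ (exists i, i <= k /\ α = App (Var (NG i)) (Var (NG (k - i)))) \/
  (k = 0 /\ α = Var NN) \/ HI k α.
Proof.
  rewrite prods_eq. unfold prods_at. intro H. apply in_app_iff in H as [H|H].
  - apply (in_base k) in H as [H|[H|H]]; auto.
  - right; right; right.
    assert (Hpr : forall j, j < k -> PJ (prevpr k) j).
    { intros j Hj. apply PJ_ext with prods. symmetry; apply prevpr_eq; auto. apply all_PJ. }
    apply (narrow_shape (prevpr k) k Hpr); auto.
Qed.

Theorem mainTheorem1 :
  { G : nat -> productions | forall n : nat, simple_RG n (G n) }.
Proof.
  exists Gram. intro n. split; [split; [|split]|split].
  - intros X α H. rewrite in_Gram in H. destruct H as [H|(k & Hk & -> & H)].
    + unfold Lambda_prods in H; simpl in H.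
      repeat (destruct H as [E|H]; [injection E; intros; subst; split; [simpl; auto|];
        intros Y HY; simpl in HY; intuition subst; simpl; auto|]); contradiction.
    + split; [simpl; auto|]. intros Y HY.
      destruct (all_PJ k) as (_ & _ & _ & _ & He).
      pose proof (occurs_allv _ α Y (He α H) HY) as HH.
      destruct Y; simpl in *; auto. lia.
  - intros p Hp. unfold Gram. apply in_app_iff. auto.
  - intros k Hk. split.
    + intros t e1 e2. apply UV_all.
    + intro t. rewrite normalises_iff. split.
      * intros [d]. apply deriv_sound in d. simpl in d. auto.
      * intro H. apply deriv_complete; auto.
  - intros X α H Hocc. rewrite in_Gram in H. destruct H as [H|(k & Hk & -> & H)]; [left; auto|].
    right. exists k. split; auto.
    destruct (prods_shape k α H) as [->|[(i & Hi & ->)|[[_ ->]|HI']]].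
    + left; auto.
    + simpl in Hocc. destruct Hocc as [E|E]; injection E; intro E'.
      * right; right. subst i. rewrite Nat.sub_diag. auto.
      * right; left. assert (i = 0) by lia. subst i. rewrite Nat.sub_0_r. auto.
    + simpl in Hocc. discriminate.
    + exfalso. pose proof (occurs_allv _ α (NG k) HI' Hocc). simpl in H0. lia.
  - intros k α H Hn Y HY. apply in_Gram_NG in H as [Hk H].
    destruct (all_PJ k) as (_ & _ & _ & _ & He).
    pose proof (occurs_allv _ α Y (He α H) HY) as HH.
    destruct Y as [| | |i]; auto. right; right; right. exists i. split; auto.
    simpl in HH. destruct (Nat.eq_dec i k); [subst; contradiction | lia].
Qed.
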